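(* Let $01234$ be a convex pentagon inscribed in a circle of radius $R$, with vertices in cyclic order and area $A$. Let $$a_0=|23|,\quad a_1=|34|,\quad a_2=|40|,\quad a_3=|01|,\quad a_4=|12|,$$ and let $X=|14|$. Put $p=a_2a_3$, $P=a_0a_1a_4$, $q=a_2^2+a_3^2$, and $Q=a_0^2+a_1^2+a_4^2$. Then $$(X^2-q)\,4AR=p\,[(Q-q)X+2P].$$
   Context: $|ij|$ denotes the distance between vertices $i$ and $j$. *)

(* Defs.v *)
From Stdlib Require Import Reals.
Open Scope R_scope.

Definition point := (R * R)%type.

Definition pdist (p q : point) : R :=
  sqrt ((fst p - fst q) ^ 2 + (snd p - snd q) ^ 2).

(* cross product of (q - p) and (r - p): positive iff p, q, r turn counterclockwise *)
Definition orient (p q r : point) : R :=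
  (fst q - fst p) * (snd r - snd p) - (snd q - snd p) * (fst r - fst p).

Definition vert (V0 V1 V2 V3 V4 : point) (i : nat) : point :=
  match Nat.modulo i 5 with
  | 0%nat => V0 | 1%nat => V1 | 2%nat => V2 | 3%nat => V3 | _ => V4
  end.

Definition convex_pentagon (V0 V1 V2 V3 V4 : point) : Prop :=
  let v := vert V0 V1 V2 V3 V4 in
  (forall i j : nat, (i < 5)%nat -> (j < 5)%nat -> j <> i -> j <> Nat.modulo (S i) 5 ->
     orient (v i) (v (S i)) (v j) > 0) \/
  (forall i j : nat, (i < 5)%nat -> (j < 5)%nat -> j <> i -> j <> Nat.modulo (S i) 5 ->
     orient (v i) (v (S i)) (v j) < 0).

(* area of the polygon (shoelace formula) *)
Definition pentagon_area (V0 V1 V2 V3 V4 : point) : R :=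
  let v := vert V0 V1 V2 V3 V4 in
  Rabs (sum_f_R0 (fun i => fst (v i) * snd (v (S i)) - fst (v (S i)) * snd (v i)) 4) / 2.

(* Main.v *)
Require Import Defs.
From Stdlib Require Import Reals Lra Lia.
Open Scope R_scope.
Definition o (a b c d e f : R) := (c-a)*(f-b)-(d-b)*(e-a).
Lemma core (x0 y0 x1 y1 x2 y2 x3 y3 x4 y4 r : R) :
  x0^2+y0^2 = r -> x1^2+y1^2 = r -> x2^2+y2^2 = r -> x3^2+y3^2 = r -> x4^2+y4^2 = r ->
  let d2 a b c d := (a-c)^2+(b-d)^2 in
  let X2 := d2 x1 y1 x4 y4 in let Y2 := d2 x2 y2 x4 y4 in
  let q := d2 x4 y4 x0 y0 + d2 x0 y0 x1 y1 in
  let Q := d2 x2 y2 x3 y3 + d2 x3 y3 x4 y4 + d2 x1 y1 x2 y2 in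
  let D0 := (x1-x0)*(x4-x0)+(y1-y0)*(y4-y0) in
  let o014 := o x0 y0 x1 y1 x4 y4 in
  let o124 := o x1 y1 x2 y2 x4 y4 in
  let o234 := o x2 y2 x3 y3 x4 y4 in
  let sh := o014 + o124 + o234 in
  -2 * D0 * sh * X2 * Y2 = o014 * (Q - q) * X2 * Y2 + 8 * r * o014 * o124 * o234.
Proof. intros h0 h1 h2 h3 h4. intros. subst d2 X2 Y2 q Q D0 o014 o124 o234 sh. unfold o.
  assert (E: forall e0 e1 e2 e3 e4, e0 = x0^2+y0^2-r -> e1 = x1^2+y1^2-r -> e2 = x2^2+y2^2-r -> e3 = x3^2+y3^2-r -> e4 = x4^2+y4^2-r ->
    -2 * ((x1-x0)*(x4-x0)+(y1-y0)*(y4-y0)) * ((x1 - x0) * (y4 - y0) - (y1 - y0) * (x4 - x0) + ((x2 - x1) * (y4 - y1) - (y2 - y1) * (x4 - x1)) + ((x3 - x2) * (y4 - y2) - (y3 - y2) * (x4 - x2))) * ((x1-x4)^2+(y1-y4)^2) * ((x2-x4)^2+(y2-y4)^2) - (((x1 - x0) * (y4 - y0) - (y1 - y0) * (x4 - x0)) * ((x2-x3)^2+(y2-y3)^2 + ((x3-x4)^2+(y3-y4)^2) + ((x1-x2)^2+(y1-y2)^2) - ((x4-x0)^2+(y4-y0)^2 + ((x0-x1)^2+(y0-y1)^2))) * ((x1-x4)^2+(y1-y4)^2) * ((x2-x4)^2+(y2-y4)^2) + 8 * r * ((x1 - x0) * (y4 - y0) - (y1 - y0) * (x4 - x0)) *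 ((x2 - x1) * (y4 - y1) - (y2 - y1) * (x4 - x1)) * ((x3 - x2) * (y4 - y2) - (y3 - y2) * (x4 - x2)))
    = ((-6)*x1^2*x2^2*x4*y1 + 6*x1^2*x2*x4^2*y1 + (-2)*x1^2*x4^3*y1 + (-2)*x1^2*x4*y1*y2^2 + 4*x1^2*x4*y1*y2*y4 + (-2)*x1^2*x4*y1*y4^2 + 12*x1*x2^2*x4^2*y1 + (-12)*x1*x2*x4^3*y1 + 4*x1*x4^4*y1 + 4*x1*x4^2*y1*y2^2 + (-4)*x1*x4^2*y1*y2*y4 + 2*x1*x2^2*y1^2*y4 + (-4)*x1*x2*x4*y1^2*y4 + 2*x1*x4^2*y1^2*y4 + 6*x1*y1^2*y2^2*y4 + (-6)*x1*y1^2*y2*y4^2 + 2*x1*y1^2*y4^3 + (-4)*x1*x2^2*y1*y4^2 + 4*x1*x2*x4*y1*y4^2 + (-12)*x1*y1*y2^2*y4^2 + (-4)*x1*y1*y4^4 + (-6)*x2^2*x4^3*y1 + 6*x2*x4^4*y1 + (-2)*x4^5*y1 + (-2)*x4^3*y1*y2^2 + 4*x4^3*y1*y2*y4 + (-6)*x2^2*x4*y1^3 + 6*x2*x4^2*y1^3 + (-2)*x4^3*y1^3 + (-2)*x4*y1^3*y2^2 + 4*x4*y1^3*y2*y4 + (-2)*x4*y1^3*y4^2 + 12*x2^2*x4*y1^2*y4 + 4*x4^3*y1^2*y4 + 4*x4*y1^2*y2^2*y4 + (-8)*x4*y1^2*y2*y4^2 + 4*x4*y1^2*y4^3 + (-6)*x2^2*x4*y1*y4^2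 + 8*x2*x4^2*y1*y4^2 + (-2)*x4*y1*y2^2*y4^2 + 4*x4*y1*y2*y4^3 + (-2)*x4*y1*y4^4 + 2*x1^3*x2^2*y4 + (-4)*x1^3*x2*x4*y4 + 2*x1^3*x4^2*y4 + 6*x1^3*y2^2*y4 + (-6)*x1^3*y2*y4^2 + 2*x1^3*y4^3 + (-4)*x1^2*x2^2*x4*y4 + 8*x1^2*x2*x4^2*y4 + (-4)*x1^2*x4^3*y4 + (-12)*x1^2*x4*y2^2*y4 + 12*x1^2*x4*y2*y4^2 + (-4)*x1^2*x4*y4^3 + 2*x1*x2^2*x4^2*y4 + (-4)*x1*x2*x4^3*y4 + 2*x1*x4^4*y4 + 6*x1*x4^2*y2^2*y4 + (-8)*x1*x4^2*y2*y4^2 + 4*x1*x4^2*y4^3 + 2*x1*x2^2*y4^3 + (-4)*x1*x2*x4*y4^3 + 6*x1*y2^2*y4^3 + (-6)*x1*y2*y4^4 + 2*x1*y4^5 + 2*x1^2*x2^3*y1 + 2*x1^2*x2*y1*y2^2 + (-4)*x1^2*x2*y1*y2*y4 + 2*x1^2*x2*y1*y4^2 + (-4)*x1*x2^3*x4*y1 + (-4)*x1*x2*x4*y1*y2^2 + 2*x2^3*x4^2*y1 + 2*x2*x4^2*y1*y2^2 + (-4)*x2*x4^2*y1*y2*y4 + 2*x2^3*y1^3 + 2*x2*y1^3*y2^2 + (-4)*x2*y1^3*y2*y4 + 2*x2*y1^3*y4^2 + (-4)*x2^3*y1^2*y4 + (-4)*x2*y1^2*y2^2*y4 + 8*x2*y1^2*y2*y4^2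 + (-4)*x2*y1^2*y4^3 + 2*x2^3*y1*y4^2 + 2*x2*y1*y2^2*y4^2 + (-4)*x2*y1*y2*y4^3 + 2*x2*y1*y4^4 + (-2)*x1^3*x2^2*y2 + 4*x1^3*x2*x4*y2 + (-2)*x1^3*x4^2*y2 + (-2)*x1^3*y2^3 + 4*x1^2*x2^2*x4*y2 + (-8)*x1^2*x2*x4^2*y2 + 4*x1^2*x4^3*y2 + 4*x1^2*x4*y2^3 + (-2)*x1*x2^2*x4^2*y2 + 4*x1*x2*x4^3*y2 + (-2)*x1*x4^4*y2 + (-2)*x1*x4^2*y2^3 + (-2)*x1*x2^2*y1^2*y2 + 4*x1*x2*x4*y1^2*y2 + (-2)*x1*x4^2*y1^2*y2 + (-2)*x1*y1^2*y2^3 + 4*x1*x2^2*y1*y2*y4 + 4*x1*y1*y2^3*y4 + (-2)*x1*x2^2*y2*y4^2 + 4*x1*x2*x4*y2*y4^2 + (-2)*x1*y2^3*y4^2 + (-2)*x1^2*x2^2*x3*y4 + 4*x1^2*x2*x3*x4*y4 + (-2)*x1^2*x3*x4^2*y4 + (-6)*x1^2*x3*y2^2*y4 + 6*x1^2*x3*y2*y4^2 + (-2)*x1^2*x3*y4^3 + 4*x1*x2^2*x3*x4*y4 + (-8)*x1*x2*x3*x4^2*y4 + 4*x1*x3*x4^3*y4 + 12*x1*x3*x4*y2^2*y4 + (-12)*x1*x3*x4*y2*y4^2 + 4*x1*x3*x4*y4^3 + (-2)*x2^2*x3*x4^2*y4 + 4*x2*x3*x4^3*y4 + (-2)*x3*x4^4*y4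 + (-6)*x3*x4^2*y2^2*y4 + 8*x3*x4^2*y2*y4^2 + (-4)*x3*x4^2*y4^3 + (-2)*x2^2*x3*y1^2*y4 + 4*x2*x3*x4*y1^2*y4 + (-2)*x3*x4^2*y1^2*y4 + (-6)*x3*y1^2*y2^2*y4 + 6*x3*y1^2*y2*y4^2 + (-2)*x3*y1^2*y4^3 + 4*x2^2*x3*y1*y4^2 + (-8)*x2*x3*x4*y1*y4^2 + 4*x3*x4^2*y1*y4^2 + 12*x3*y1*y2^2*y4^2 + (-12)*x3*y1*y2*y4^3 + 4*x3*y1*y4^4 + (-2)*x2^2*x3*y4^3 + 4*x2*x3*x4*y4^3 + (-6)*x3*y2^2*y4^3 + 6*x3*y2*y4^4 + (-2)*x3*y4^5 + 2*x1^2*x2^2*x3*y2 + (-4)*x1^2*x2*x3*x4*y2 + 2*x1^2*x3*x4^2*y2 + 2*x1^2*x3*y2^3 + (-4)*x1*x2^2*x3*x4*y2 + 8*x1*x2*x3*x4^2*y2 + (-4)*x1*x3*x4^3*y2 + (-4)*x1*x3*x4*y2^3 + 2*x2^2*x3*x4^2*y2 + (-4)*x2*x3*x4^3*y2 + 2*x3*x4^4*y2 + 2*x3*x4^2*y2^3 + 2*x2^2*x3*y1^2*y2 + (-4)*x2*x3*x4*y1^2*y2 + 2*x3*x4^2*y1^2*y2 + 2*x3*y1^2*y2^3 + (-4)*x2^2*x3*y1*y2*y4 + 8*x2*x3*x4*y1*y2*y4 + (-4)*x3*x4^2*y1*y2*y4 + (-4)*x3*y1*y2^3*y4 + 2*x2^2*x3*y2*y4^2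 + (-4)*x2*x3*x4*y2*y4^2 + 2*x3*y2^3*y4^2 + 6*x1^2*x2^2*x4*y3 + (-6)*x1^2*x2*x4^2*y3 + 2*x1^2*x4^3*y3 + 2*x1^2*x4*y2^2*y3 + (-4)*x1^2*x4*y2*y3*y4 + 2*x1^2*x4*y3*y4^2 + (-12)*x1*x2^2*x4^2*y3 + 12*x1*x2*x4^3*y3 + (-4)*x1*x4^4*y3 + (-4)*x1*x4^2*y2^2*y3 + 8*x1*x4^2*y2*y3*y4 + (-4)*x1*x4^2*y3*y4^2 + 6*x2^2*x4^3*y3 + (-6)*x2*x4^4*y3 + 2*x4^5*y3 + 2*x4^3*y2^2*y3 + (-4)*x4^3*y2*y3*y4 + 4*x4^3*y3*y4^2 + 6*x2^2*x4*y1^2*y3 + (-6)*x2*x4^2*y1^2*y3 + 2*x4^3*y1^2*y3 + 2*x4*y1^2*y2^2*y3 + (-4)*x4*y1^2*y2*y3*y4 + 2*x4*y1^2*y3*y4^2 + (-12)*x2^2*x4*y1*y3*y4 + 12*x2*x4^2*y1*y3*y4 + (-4)*x4^3*y1*y3*y4 + (-4)*x4*y1*y2^2*y3*y4 + 8*x4*y1*y2*y3*y4^2 + (-4)*x4*y1*y3*y4^3 + 6*x2^2*x4*y3*y4^2 + (-8)*x2*x4^2*y3*y4^2 + 2*x4*y2^2*y3*y4^2 + (-4)*x4*y2*y3*y4^3 + 2*x4*y3*y4^4 + (-2)*x1^2*x2^3*y3 + (-2)*x1^2*x2*y2^2*y3 + 4*x1^2*x2*y2*y3*y4 + (-2)*x1^2*x2*y3*y4^2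 + 4*x1*x2^3*x4*y3 + 4*x1*x2*x4*y2^2*y3 + (-8)*x1*x2*x4*y2*y3*y4 + 4*x1*x2*x4*y3*y4^2 + (-2)*x2^3*x4^2*y3 + (-2)*x2*x4^2*y2^2*y3 + 4*x2*x4^2*y2*y3*y4 + (-2)*x2^3*y1^2*y3 + (-2)*x2*y1^2*y2^2*y3 + 4*x2*y1^2*y2*y3*y4 + (-2)*x2*y1^2*y3*y4^2 + 4*x2^3*y1*y3*y4 + 4*x2*y1*y2^2*y3*y4 + (-8)*x2*y1*y2*y3*y4^2 + 4*x2*y1*y3*y4^3 + (-2)*x2^3*y3*y4^2 + (-2)*x2*y2^2*y3*y4^2 + 4*x2*y2*y3*y4^3 + (-2)*x2*y3*y4^4 + 12*x1*y1*y2*y4^3 + (-4)*x4^3*y1*y4^2 + (-12)*x2*x4^2*y1^2*y4)*e0 + (6*x1^2*x2^2*x4*y0 + (-6)*x1^2*x2*x4^2*y0 + 2*x1^2*x4^3*y0 + 2*x1^2*x4*y0*y2^2 + (-4)*x1^2*x4*y0*y2*y4 + 2*x1^2*x4*y0*y4^2 + 8*x0*x1*x2^2*x4*y4 + (-10)*x0*x1*x2*x4^2*y4 + 4*x0*x1*x4^3*y4 + 8*x0*x1*x4*y2^2*y4 + (-10)*x0*x1*x4*y2*y4^2 + 4*x0*x1*x4*y4^3 + (-16)*x1*x2^2*x4^2*y0 + 18*x1*x2*x4^3*y0 + (-6)*x1*x4^4*y0 + (-4)*x1*x4^2*y0*y2^2 + 14*x1*x4^2*y0*y2*y4 + (-8)*x1*x4^2*y0*y4^2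 + 6*x1*x2^2*x4^2*y4 + (-4)*x1*x2*x4^3*y4 + 8*x1*x2*x4*y2*y4^2 + (-4)*x1*x2*x4*y4^3 + (-2)*x1^2*x2^2*x4*y2 + 4*x1^2*x2*x4^2*y2 + (-2)*x1^2*x4^3*y2 + (-2)*x1^2*x4*y2^3 + 4*x1^2*x4*y2^2*y4 + (-2)*x1^2*x4*y2*y4^2 + (-4)*x1*x2^2*x3*x4*y4 + 2*x1*x2*x3*x4^2*y4 + (-4)*x1*x3*x4*y2^2*y4 + 2*x1*x3*x4*y2*y4^2 + 2*x1*x2^2*x3*x4*y2 + (-4)*x1*x2*x3*x4^2*y2 + 2*x1*x3*x4^3*y2 + 2*x1*x3*x4*y2^3 + 6*x1*x2^2*x4^2*y3 + (-6)*x1*x2*x4^3*y3 + 2*x1*x4^4*y3 + 2*x1*x4^2*y2^2*y3 + (-2)*x1*x4^2*y2*y3*y4 + 4*x1*x4^2*y3*y4^2 + (-2)*x1*x2^3*x4*y3 + (-2)*x1*x2*x4*y2^2*y3 + (-6)*x1*x2*x4*y3*y4^2 + (-2)*x0*x1*x2^3*y4 + (-2)*x0*x1*x2*y2^2*y4 + 4*x0*x1*x2*y2*y4^2 + (-2)*x0*x1*x2*y4^3 + 2*x0*x1^2*x2^2*y2 + (-4)*x0*x1^2*x2*x4*y2 + 2*x0*x1^2*x4^2*y2 + 2*x0*x1^2*y2^3 + (-6)*x0*x1^2*y2^2*y4 + 6*x0*x1^2*y2*y4^2 + 2*x0*x1*x2^2*x3*y4 + (-4)*x0*x1*x2*x3*x4*y4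 + 2*x0*x1*x3*x4^2*y4 + 6*x0*x1*x3*y2^2*y4 + (-6)*x0*x1*x3*y2*y4^2 + 2*x0*x1*x3*y4^3 + (-2)*x0*x1*x2^2*x3*y2 + 4*x0*x1*x2*x3*x4*y2 + (-2)*x0*x1*x3*x4^2*y2 + (-2)*x0*x1*x3*y2^3 + (-6)*x0*x1*x2^2*x4*y3 + 6*x0*x1*x2*x4^2*y3 + (-2)*x0*x1*x4^3*y3 + (-2)*x0*x1*x4*y2^2*y3 + 4*x0*x1*x4*y2*y3*y4 + (-2)*x0*x1*x4*y3*y4^2 + 2*x0*x1*x2^3*y3 + 2*x0*x1*x2*y2^2*y3 + (-4)*x0*x1*x2*y2*y3*y4 + 2*x0*x1*x2*y3*y4^2 + 2*x0*x2^3*x4*y1 + 4*x0*x2^2*x4^2*y1 + (-6)*x0*x2*x4^3*y1 + 2*x0*x2*x4*y1*y2^2 + 16*x0*x2*x4*y1*y2*y4 + (-14)*x0*x2*x4*y1*y4^2 + (-8)*x0*x2^3*x4*y4 + (-8)*x0*x2^2*x4^2*y4 + 16*x0*x2*x4^3*y4 + (-8)*x0*x2*x4*y2^2*y4 + (-20)*x0*x2*x4*y2*y4^2 + 16*x0*x2*x4*y4^3 + (-2)*x0*x1*x2^2*x4*y2 + 4*x0*x1*x2*x4^2*y2 + (-2)*x0*x1*x4^3*y2 + (-2)*x0*x1*x4*y2^3 + 8*x0*x2^2*x3*x4*y4 + 2*x0*x2*x3*x4^2*y4 + (-4)*x0*x3*x4^3*y4 + 6*x0*x3*x4*y2*y4^2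 + (-4)*x0*x3*x4*y4^3 + (-2)*x0*x2^2*x3*x4*y2 + 4*x0*x2*x3*x4^2*y2 + (-2)*x0*x3*x4^3*y2 + (-2)*x0*x3*x4*y2^3 + (-6)*x0*x2^2*x4^2*y3 + 6*x0*x2*x4^3*y3 + (-2)*x0*x4^4*y3 + (-2)*x0*x4^2*y2^2*y3 + (-2)*x0*x4^2*y2*y3*y4 + (-8)*x0*x4^2*y3*y4^2 + 2*x0*x2^3*x4*y3 + 2*x0*x2*x4*y2^2*y3 + 8*x0*x2*x4*y2*y3*y4 + 14*x0*x2*x4*y3*y4^2 + 10*x1*x2*x4*y0*y4^2 + 6*x1*y0*y2*y4^3 + (-2)*x1*y0*y4^4 + 4*x0*x2^2*y1*y4^2 + 8*x0*x4^2*y1*y4^2 + 16*x0*y1*y2^2*y4^2 + (-18)*x0*y1*y2*y4^3 + 6*x0*y1*y4^4 + (-12)*x0*x4^2*y4^3 + (-12)*x0*y2^2*y4^3 + 18*x0*y2*y4^4 + (-6)*x0*y4^5 + (-2)*x0*x1^2*x2^2*y4 + 4*x0*x1^2*x2*x4*y4 + (-2)*x0*x1^2*x4^2*y4 + (-2)*x0*x1^2*y4^3 + (-6)*x0*x4^4*y4 + (-4)*x0*x4^2*y2^2*y4 + 20*x0*x4^2*y2*y4^2 + (-2)*x0*x2^2*y1^2*y4 + 4*x0*x2*x4*y1^2*y4 + (-2)*x0*x4^2*y1^2*y4 + (-6)*x0*y1^2*y2^2*y4 + 6*x0*y1^2*y2*y4^2 + (-2)*x0*y1^2*y4^3 + (-8)*x2^2*x4*y0*y1*y4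 + 10*x2*x4^2*y0*y1*y4 + (-4)*x4^3*y0*y1*y4 + (-8)*x4*y0*y1*y2^2*y4 + 10*x4*y0*y1*y2*y4^2 + (-4)*x4*y0*y1*y4^3 + (-4)*x2*x4^2*y0*y4^2 + 4*x4^3*y0*y4^2 + 8*x4*y0*y2^2*y4^2 + (-8)*x4*y0*y2*y4^3 + 2*x4*y0*y4^4 + 2*x1^2*x2^3*y4 + (-4)*x1^2*x2^2*x4*y4 + 2*x1^2*x2*x4^2*y4 + 2*x1^2*x2*y2^2*y4 + (-4)*x1^2*x2*y2*y4^2 + 2*x1^2*x2*y4^3 + 10*x2^3*x4^2*y4 + (-8)*x2^2*x4^3*y4 + 2*x2*x4^4*y4 + 10*x2*x4^2*y2^2*y4 + 4*x2*x4^2*y4^3 + 2*x2^3*y1^2*y4 + (-4)*x2^2*x4*y1^2*y4 + 2*x2*x4^2*y1^2*y4 + 2*x2*y1^2*y2^2*y4 + (-4)*x2*y1^2*y2*y4^2 + 2*x2*y1^2*y4^3 + (-4)*x2^3*y1*y4^2 + 10*x2^2*x4*y1*y4^2 + (-4)*x2*x4^2*y1*y4^2 + (-4)*x2*y1*y2^2*y4^2 + 8*x2*y1*y2*y4^3 + (-4)*x2*y1*y4^4 + 2*x2^3*y4^3 + (-8)*x2^2*x4*y4^3 + 2*x2*y2^2*y4^3 + (-4)*x2*y2*y4^4 + 2*x2*y4^5 + 4*x1*x2^2*y2*y4^2 + 4*x1*x4^2*y2*y4^2 + 4*x1*y2^3*y4^2 + (-2)*x1*y2^2*y4^3 + (-2)*x2^2*x3*y1*y4^2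 + 2*x2*x3*x4*y1*y4^2 + (-4)*x3*x4^2*y1*y4^2 + (-6)*x3*y1*y2^2*y4^2 + 6*x3*y1*y2*y4^3 + (-2)*x3*y1*y4^4 + 4*x2^2*x3*y4^3 + (-4)*x2*x3*x4*y4^3 + 8*x3*x4^2*y4^3 + 12*x3*y2^2*y4^3 + (-12)*x3*y2*y4^4 + 4*x3*y4^5 + 2*x2^2*x3*y1*y2*y4 + 6*x3*x4^2*y1*y2*y4 + 2*x3*y1*y2^3*y4 + (-4)*x2^2*x3*y2*y4^2 + (-12)*x3*x4^2*y2*y4^2 + (-4)*x3*y2^3*y4^2 + 4*x2^2*x4*y1*y3*y4 + (-2)*x2*x4^2*y1*y3*y4 + 4*x4*y1*y2^2*y3*y4 + (-2)*x4*y1*y2*y3*y4^2 + (-8)*x2^2*x4*y3*y4^2 + 4*x2*x4^2*y3*y4^2 + (-8)*x4*y2^2*y3*y4^2 + 4*x4*y2*y3*y4^3 + (-2)*x2^3*y1*y3*y4 + (-2)*x2*y1*y2^2*y3*y4 + 4*x2*y1*y2*y3*y4^2 + (-2)*x2*y1*y3*y4^3 + 4*x2^3*y3*y4^2 + 4*x2*y2^2*y3*y4^2 + (-8)*x2*y2*y3*y4^3 + 4*x2*y3*y4^4 + (-2)*x1^2*x2^3*y0 + (-2)*x1^2*x2*y0*y2^2 + 4*x1^2*x2*y0*y2*y4 + (-2)*x1^2*x2*y0*y4^2 + 2*x1*x2^3*x4*y0 + 2*x1*x2*x4*y0*y2^2 + (-16)*x1*x2*x4*y0*y2*y4 + 2*x2^3*x4^2*y0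 + 4*x2^2*x4^3*y0 + (-6)*x2*x4^4*y0 + 2*x2*x4^2*y0*y2^2 + 12*x2*x4^2*y0*y2*y4 + (-2)*x2^3*y0*y1^2 + 6*x2^2*x4*y0*y1^2 + (-6)*x2*x4^2*y0*y1^2 + (-2)*x2*y0*y1^2*y2^2 + 4*x2*y0*y1^2*y2*y4 + (-2)*x2*y0*y1^2*y4^2 + 2*x2^3*y0*y1*y4 + 2*x2*y0*y1*y2^2*y4 + (-4)*x2*y0*y1*y2*y4^2 + 2*x2*y0*y1*y4^3 + 2*x2^3*y0*y4^2 + 2*x2*y0*y2^2*y4^2 + (-4)*x2*y0*y2*y4^3 + 2*x2*y0*y4^4 + (-2)*x1*x2^2*y0*y2*y4 + (-2)*x1*y0*y2^3*y4 + 2*x2^2*x3*y0*y1*y4 + (-4)*x2*x3*x4*y0*y1*y4 + 2*x3*x4^2*y0*y1*y4 + 6*x3*y0*y1*y2^2*y4 + (-6)*x3*y0*y1*y2*y4^2 + 2*x3*y0*y1*y4^3 + (-2)*x2^2*x3*y0*y4^2 + 6*x2*x3*x4*y0*y4^2 + (-6)*x3*y0*y2^2*y4^2 + 6*x3*y0*y2*y4^3 + (-2)*x3*y0*y4^4 + (-2)*x2^2*x3*y0*y1*y2 + 4*x2*x3*x4*y0*y1*y2 + (-2)*x3*x4^2*y0*y1*y2 + (-2)*x3*y0*y1*y2^3 + 2*x2^2*x3*y0*y2*y4 + (-8)*x2*x3*x4*y0*y2*y4 + (-2)*x3*x4^2*y0*y2*y4 + 2*x3*y0*y2^3*y4 +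 (-6)*x2^2*x4*y0*y1*y3 + 6*x2*x4^2*y0*y1*y3 + (-2)*x4^3*y0*y1*y3 + (-2)*x4*y0*y1*y2^2*y3 + 4*x4*y0*y1*y2*y3*y4 + (-2)*x4*y0*y1*y3*y4^2 + 8*x2^2*x4*y0*y3*y4 + (-10)*x2*x4^2*y0*y3*y4 + 4*x4^3*y0*y3*y4 + (-6)*x4*y0*y2*y3*y4^2 + 4*x4*y0*y3*y4^3 + 2*x2^3*y0*y1*y3 + 2*x2*y0*y1*y2^2*y3 + (-4)*x2*y0*y1*y2*y3*y4 + 2*x2*y0*y1*y3*y4^2 + (-2)*x2^3*y0*y3*y4 + (-2)*x2*y0*y2^2*y3*y4 + 4*x2*y0*y2*y3*y4^2 + (-2)*x2*y0*y3*y4^3 + (-2)*x1*x2^4*y4 + (-4)*x1*x2^2*y2^2*y4 + (-2)*x1*x2^2*y4^3 + 2*x1*x2^3*x3*y4 + 2*x1*x2*x3*y2^2*y4 + (-4)*x1*x2*x3*y2*y4^2 + 2*x1*x2*x3*y4^3 + (-2)*x1*x2^2*x3^2*y4 + 4*x1*x2*x3^2*x4*y4 + (-2)*x1*x3^2*x4^2*y4 + (-2)*x1*x3^2*y2^2*y4 + 4*x1*x3^2*y2*y4^2 + (-2)*x1*x3^2*y4^3 + (-10)*x1*x4^2*y2^2*y4 + (-2)*x1*y2^4*y4 + 2*x1*x2^2*y2*y3*y4 + 2*x1*y2^3*y3*y4 + (-2)*x1*y2^2*y3*y4^2 + (-2)*x1*y2*y3*y4^3 + (-2)*x1*x2^2*y3^2*y4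 + 4*x1*x2*x4*y3^2*y4 + (-2)*x1*x4^2*y3^2*y4 + (-2)*x1*y2^2*y3^2*y4 + 4*x1*y2*y3^2*y4^2 + (-2)*x1*y3^2*y4^3 + 2*x1*x2^2*y3*y4^2 + 2*x1*y3*y4^4 + (-4)*x1*y0*y2^2*y4^2 + 2*x1*x2^4*y0 + 4*x1*x2^2*y0*y2^2 + (-2)*x1*x2^3*x3*y0 + 2*x1*x2^2*x3*x4*y0 + 2*x1*x2*x3*x4^2*y0 + (-2)*x1*x2*x3*y0*y2^2 + 4*x1*x2*x3*y0*y2*y4 + (-2)*x1*x2*x3*y0*y4^2 + 2*x1*x2^2*x3^2*y0 + (-4)*x1*x2*x3^2*x4*y0 + 2*x1*x3^2*x4^2*y0 + 2*x1*x3^2*y0*y2^2 + (-4)*x1*x3^2*y0*y2*y4 + 2*x1*x3^2*y0*y4^2 + 2*x1*y0*y2^4 + (-2)*x1*x2^2*y0*y2*y3 + 4*x1*x2*x4*y0*y2*y3 + (-2)*x1*x4^2*y0*y2*y3 + (-2)*x1*y0*y2^3*y3 + 2*x1*y0*y2^2*y3*y4 + 2*x1*y0*y2*y3*y4^2 + 2*x1*x2^2*y0*y3^2 + (-4)*x1*x2*x4*y0*y3^2 + 2*x1*x4^2*y0*y3^2 + 2*x1*y0*y2^2*y3^2 + (-4)*x1*y0*y2*y3^2*y4 + 2*x1*y0*y3^2*y4^2 + (-2)*x1*x3*x4^3*y0 + (-2)*x1*x3*x4*y0*y2^2 + 4*x1*x3*x4*y0*y2*y4 + (-2)*x1*x3*x4*y0*y4^2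 + (-2)*x1*x2^2*y0*y3*y4 + 4*x1*x2*x4*y0*y3*y4 + (-2)*x1*x4^2*y0*y3*y4 + (-2)*x1*y0*y3*y4^3 + 6*x0*x2^4*y4 + 12*x0*x2^2*y2^2*y4 + (-6)*x0*x2^2*y2*y4^2 + (-6)*x0*x2^3*x3*y4 + (-6)*x0*x2*x3*y2^2*y4 + 12*x0*x2*x3*y2*y4^2 + (-6)*x0*x2*x3*y4^3 + 6*x0*x2^2*x3^2*y4 + (-12)*x0*x2*x3^2*x4*y4 + 6*x0*x3^2*x4^2*y4 + 6*x0*x3^2*y2^2*y4 + (-12)*x0*x3^2*y2*y4^2 + 6*x0*x3^2*y4^3 + 6*x0*y2^4*y4 + (-6)*x0*y2^3*y4^2 + (-6)*x0*x2^2*y2*y3*y4 + (-6)*x0*y2^3*y3*y4 + 6*x0*y2^2*y3*y4^2 + 6*x0*y2*y3*y4^3 + 6*x0*x2^2*y3^2*y4 + (-12)*x0*x2*x4*y3^2*y4 + 6*x0*x4^2*y3^2*y4 + 6*x0*y2^2*y3^2*y4 + (-12)*x0*y2*y3^2*y4^2 + 6*x0*y3^2*y4^3 + (-6)*x0*x2^2*y3*y4^2 + (-6)*x0*y3*y4^4 + (-2)*x0*x2^2*y1*y2*y4 + (-10)*x0*x4^2*y1*y2*y4 + (-2)*x0*y1*y2^3*y4 + 2*x2^4*x4*y1 + (-4)*x2^3*x4^2*y1 + 2*x2^2*x4^3*y1 + 4*x2^2*x4*y1*y2^2 + (-4)*x2^4*x4*y4 + (-8)*x2^2*x4*y2^2*y4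 + 6*x2^2*x4*y2*y4^2 + (-2)*x2^3*x3*x4*y1 + 2*x2^2*x3*x4^2*y1 + 2*x2*x3*x4^3*y1 + (-2)*x2*x3*x4*y1*y2^2 + 4*x2^3*x3*x4*y4 + (-4)*x2^2*x3*x4^2*y4 + (-4)*x2*x3*x4^3*y4 + 4*x2*x3*x4*y2^2*y4 + 2*x2^2*x3^2*x4*y1 + (-4)*x2*x3^2*x4^2*y1 + 2*x3^2*x4^3*y1 + 2*x3^2*x4*y1*y2^2 + (-4)*x3^2*x4*y1*y2*y4 + 2*x3^2*x4*y1*y4^2 + (-4)*x2^2*x3^2*x4*y4 + 8*x2*x3^2*x4^2*y4 + (-4)*x3^2*x4^3*y4 + (-4)*x3^2*x4*y2^2*y4 + 8*x3^2*x4*y2*y4^2 + (-4)*x3^2*x4*y4^3 + (-4)*x2*x4^2*y1*y2^2 + 2*x4^3*y1*y2^2 + 2*x4*y1*y2^4 + (-6)*x4*y1*y2^2*y4^2 + (-4)*x4*y2^4*y4 + 6*x4*y2^3*y4^2 + (-2)*x2^2*x4*y1*y2*y3 + 4*x2*x4^2*y1*y2*y3 + (-2)*x4^3*y1*y2*y3 + (-2)*x4*y1*y2^3*y3 + 4*x2^2*x4*y2*y3*y4 + (-8)*x2*x4^2*y2*y3*y4 + 4*x4^3*y2*y3*y4 + 4*x4*y2^3*y3*y4 + 2*x2^2*x4*y1*y3^2 + (-4)*x2*x4^2*y1*y3^2 + 2*x4^3*y1*y3^2 + 2*x4*y1*y2^2*y3^2 + (-4)*x4*y1*y2*y3^2*y4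 + 2*x4*y1*y3^2*y4^2 + (-4)*x2^2*x4*y3^2*y4 + 8*x2*x4^2*y3^2*y4 + (-4)*x4^3*y3^2*y4 + (-4)*x4*y2^2*y3^2*y4 + 8*x4*y2*y3^2*y4^2 + (-4)*x4*y3^2*y4^3 + (-2)*x3*x4^4*y1 + (-2)*x3*x4^2*y1*y2^2 + 4*x3*x4^4*y4 + 4*x3*x4^2*y2^2*y4 + 4*x1*x2^2*x4^2*y2 + (-8)*x1*x2*x4^3*y2 + 4*x1*x4^4*y2 + 4*x1*x4^2*y2^3 + (-2)*x2^2*x4^3*y2 + 4*x2*x4^4*y2 + (-2)*x4^5*y2 + (-2)*x4^3*y2^3 + (-4)*x4^3*y2*y4^2 + (-2)*x2^2*x4*y1^2*y2 + 4*x2*x4^2*y1^2*y2 + (-2)*x4^3*y1^2*y2 + (-2)*x4*y1^2*y2^3 + 4*x4*y1^2*y2^2*y4 + (-2)*x4*y1^2*y2*y4^2 + (-8)*x2*x4^2*y1*y2*y4 + 4*x4^3*y1*y2*y4 + 4*x4*y1*y2*y4^3 + (-2)*x4*y2*y4^4 + 2*x0*x4^4*y1 + (-4)*x2^2*x4*y0*y4^2 + 2*x4^5*y0 + (-8)*x4^3*y0*y2*y4 + 2*x4^3*y0*y1^2 + 2*x4*y0*y1^2*y2^2 + (-4)*x4*y0*y1^2*y2*y4 + 2*x4*y0*y1^2*y4^2 + (-2)*x0*x2^4*y1 + (-4)*x0*x2^2*y1*y2^2 + 2*x0*x2^3*x3*y1 + (-2)*x0*x2^2*x3*x4*y1 +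 (-2)*x0*x2*x3*x4^2*y1 + 2*x0*x2*x3*y1*y2^2 + (-4)*x0*x2*x3*y1*y2*y4 + 2*x0*x2*x3*y1*y4^2 + (-2)*x0*x2^2*x3^2*y1 + 4*x0*x2*x3^2*x4*y1 + (-2)*x0*x3^2*x4^2*y1 + (-2)*x0*x3^2*y1*y2^2 + 4*x0*x3^2*y1*y2*y4 + (-2)*x0*x3^2*y1*y4^2 + (-2)*x0*y1*y2^4 + 2*x0*x2^2*y1*y2*y3 + (-4)*x0*x2*x4*y1*y2*y3 + 2*x0*x4^2*y1*y2*y3 + 2*x0*y1*y2^3*y3 + (-2)*x0*y1*y2^2*y3*y4 + (-2)*x0*y1*y2*y3*y4^2 + (-2)*x0*x2^2*y1*y3^2 + 4*x0*x2*x4*y1*y3^2 + (-2)*x0*x4^2*y1*y3^2 + (-2)*x0*y1*y2^2*y3^2 + 4*x0*y1*y2*y3^2*y4 + (-2)*x0*y1*y3^2*y4^2 + 2*x0*x3*x4^3*y1 + 2*x0*x3*x4*y1*y2^2 + (-4)*x0*x3*x4*y1*y2*y4 + 2*x0*x3*x4*y1*y4^2 + 2*x0*x2^2*y1*y3*y4 + (-4)*x0*x2*x4*y1*y3*y4 + 2*x0*x4^2*y1*y3*y4 + 2*x0*y1*y3*y4^3 + 2*x0*x2^2*x4^2*y2 + (-4)*x0*x2*x4^3*y2 + 2*x0*x4^4*y2 + 2*x0*x4^2*y2^3 + 2*x0*x2^2*y1^2*y2 + (-4)*x0*x2*x4*y1^2*y2 + 2*x0*x4^2*y1^2*y2 +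 2*x0*y1^2*y2^3 + (-2)*x2^4*x4*y0 + (-4)*x2^2*x4*y0*y2^2 + 2*x2^3*x3*x4*y0 + (-2)*x2^2*x3*x4^2*y0 + (-2)*x2*x3*x4^3*y0 + 2*x2*x3*x4*y0*y2^2 + (-2)*x2^2*x3^2*x4*y0 + 4*x2*x3^2*x4^2*y0 + (-2)*x3^2*x4^3*y0 + (-2)*x3^2*x4*y0*y2^2 + 4*x3^2*x4*y0*y2*y4 + (-2)*x3^2*x4*y0*y4^2 + (-2)*x4*y0*y2^4 + 2*x2^2*x4*y0*y2*y3 + (-4)*x2*x4^2*y0*y2*y3 + 2*x4^3*y0*y2*y3 + 2*x4*y0*y2^3*y3 + (-2)*x2^2*x4*y0*y3^2 + 4*x2*x4^2*y0*y3^2 + (-2)*x4^3*y0*y3^2 + (-2)*x4*y0*y2^2*y3^2 + 4*x4*y0*y2*y3^2*y4 + (-2)*x4*y0*y3^2*y4^2 + 2*x3*x4^4*y0 + 2*x3*x4^2*y0*y2^2 + 2*x2^2*x4*y0*y1*y2 + (-4)*x2*x4^2*y0*y1*y2 + 2*x4^3*y0*y1*y2 + 2*x4*y0*y1*y2^3 + (-4)*x2*x3*x4*y4*r + 4*x2*x3*x4*y2*r + 16*x2^2*x4*y4*r + 10*x2*x4^2*y3*r + (-2)*x2^2*x4*y3*r + (-4)*x2*x4^2*y2*r + 6*x3*x4^2*y4*r + (-6)*x3*x4^2*y2*r + (-18)*x2*x4^2*y4*r + (-6)*x4^3*y3*r + 6*x4^3*y2*r + 8*x0*x2*x3*y4*r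 + (-8)*x0*x2*x3*y2*r + (-10)*x0*x2^2*y4*r + (-16)*x0*x2*x4*y3*r + 8*x0*x2^2*y3*r + 4*x0*x2*x4*y2*r + (-8)*x0*x3*x4*y4*r + 8*x0*x3*x4*y2*r + 12*x0*x2*x4*y4*r + 8*x0*x4^2*y3*r + (-6)*x0*x4^2*y2*r + (-2)*x0*x4^2*y4*r + (-6)*x0*y2^2*y4*r + 6*x0*y2*y4^2*r + (-2)*x0*y4^3*r + (-2)*x2^3*y4*r + (-2)*x2*y2^2*y4*r + 4*x2*y2*y4^2*r + (-2)*x2*y4^3*r + 2*x1*x2^2*y4*r + (-4)*x1*x2*x4*y4*r + 2*x1*x4^2*y4*r + 6*x1*y2^2*y4*r + (-6)*x1*y2*y4^2*r + 2*x1*y4^3*r + (-6)*x2^2*x4*y1*r + 6*x2*x4^2*y1*r + (-2)*x4^3*y1*r + (-2)*x4*y1*y2^2*r + 4*x4*y1*y2*y4*r + (-2)*x4*y1*y4^2*r + 4*x4^3*y4*r + 8*x4*y2^2*y4*r + (-10)*x4*y2*y4^2*r + 4*x4*y4^3*r + (-2)*x2^3*y0*r + 6*x2^2*x4*y0*r + (-6)*x2*x4^2*y0*r + (-2)*x2*y0*y2^2*r + 4*x2*y0*y2*y4*r + (-2)*x2*y0*y4^2*r + 2*x2^3*y1*r + 2*x2*y1*y2^2*r + (-4)*x2*y1*y2*y4*r + 2*x2*y1*y4^2*r + (-2)*x1*x2^2*y2*r + 4*x1*x2*x4*y2*r + (-2)*x1*x4^2*y2*r + (-2)*x1*y2^3*r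 + (-2)*x2^2*x3*y4*r + (-6)*x3*y2^2*y4*r + 6*x3*y2*y4^2*r + (-2)*x3*y4^3*r + 2*x2^2*x3*y2*r + 2*x3*y2^3*r + 2*x4*y2^2*y3*r + (-4)*x4*y2*y3*y4*r + 2*x4*y3*y4^2*r + (-2)*x2^3*y3*r + (-2)*x2*y2^2*y3*r + 4*x2*y2*y3*y4*r + (-2)*x2*y3*y4^2*r + (-2)*x2^2*x4*y2*r + (-2)*x4*y2^3*r + 2*x4^3*y0*r + 2*x4*y0*y2^2*r + (-4)*x4*y0*y2*y4*r + 2*x4*y0*y4^2*r + 2*x0*x2^2*y2*r + 2*x0*y2^3*r)*e1 + ((-8)*x0*x1*x4^3*y4 + (-8)*x0*x1*x4*y4^3 + 4*x1*x4^4*y0 + 8*x1*x4^2*y0*y1*y4 + 8*x1*x2*x4^3*y1 + (-8)*x1*x2*x4*y1*y4^2 + 8*x1^2*x4^3*y4 + (-16)*x1^2*x4*y2*y4^2 + 8*x1^2*x4*y4^3 + 4*x1^2*x3*x4^2*y4 + (-4)*x1*x3*x4^3*y4 + 20*x1*x3*x4*y1*y4^2 + (-4)*x1*x3*x4*y4^3 + (-4)*x1^2*x3*x4^2*y2 + 2*x1*x3*x4^3*y2 + (-8)*x1*x3*x4*y1*y2*y4 + 2*x1*x3*x4*y2*y4^2 + (-4)*x1^2*x4^3*y3 + 2*x1*x4^4*y3 + (-12)*x1*x4^2*y1*y3*y4 + 4*x1^2*x2*x4^2*y3 + (-2)*x1*x2*x4^3*y3 + 8*x1*x2*x4*y1*y3*y4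 + (-2)*x1*x2*x4*y3*y4^2 + (-4)*x0*x1*x2*x4^2*y1 + 4*x0*x1*x2*y1*y4^2 + (-4)*x0*x1^2*x4^2*y2 + 4*x0*x1^2*y2*y4^2 + 8*x0*x1^2*y4^3 + (-8)*x0*x1^2*x3*x4*y4 + (-2)*x0*x1*x3*x4^2*y4 + (-12)*x0*x1*x3*y1*y4^2 + 6*x0*x1*x3*y4^3 + 4*x0*x1^2*x3*x4*y2 + 2*x0*x1*x3*x4^2*y2 + 4*x0*x1*x3*y1*y2*y4 + (-2)*x0*x1*x3*y2*y4^2 + 4*x0*x1^2*x4^2*y3 + 2*x0*x1*x4^3*y3 + 8*x0*x1*x4*y1*y3*y4 + (-6)*x0*x1*x4*y3*y4^2 + (-4)*x0*x1^2*x2*x4*y3 + (-2)*x0*x1*x2*x4^2*y3 + (-4)*x0*x1*x2*y1*y3*y4 + 2*x0*x1*x2*y3*y4^2 + 2*x0*x2*x4^3*y1 + 10*x0*x2*x4*y1*y4^2 + 2*x0*x1*x4^3*y2 + (-8)*x0*x1*x4*y1*y2*y4 + 10*x0*x1*x4*y2*y4^2 + 4*x0*x3*x4^3*y4 + (-6)*x0*x3*x4*y1*y4^2 + 4*x0*x3*x4*y4^3 + (-2)*x0*x3*x4^3*y2 + 4*x0*x3*x4*y1*y2*y4 + (-2)*x0*x3*x4*y2*y4^2 + (-2)*x0*x4^4*y3 + 2*x0*x4^2*y1*y3*y4 + 2*x0*x2*x4^3*y3 + (-4)*x0*x2*x4*y1*y3*y4 + 2*x0*x2*x4*y3*y4^2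 + 8*x1*y0*y1*y4^3 + 8*x1*x4^2*y1*y2*y4 + (-8)*x1*y1*y2*y4^3 + 4*x1*y1*y4^4 + (-8)*x3*x4^2*y1*y4^2 + (-6)*x3*y1*y4^4 + 2*x3*x4^2*y1*y2*y4 + 2*x3*y1*y2*y4^3 + 4*x4^3*y1*y3*y4 + 4*x4*y1*y3*y4^3 + (-2)*x2*x4^2*y1*y3*y4 + (-2)*x2*y1*y3*y4^3 + (-4)*x1*x4^2*y0*y1*y2 + 4*x1*y0*y1*y2*y4^2 + (-8)*x1*x3*x4*y0*y1*y4 + 2*x3*x4^2*y0*y1*y4 + (-6)*x3*y0*y1*y4^3 + 4*x1*x3*x4*y0*y1*y2 + (-2)*x3*x4^2*y0*y1*y2 + 2*x3*y0*y1*y2*y4^2 + 4*x1*x4^2*y0*y1*y3 + (-2)*x4^3*y0*y1*y3 + 6*x4*y0*y1*y3*y4^2 + (-4)*x1*x2*x4*y0*y1*y3 + 2*x2*x4^2*y0*y1*y3 + (-2)*x2*y0*y1*y3*y4^2 + 8*x1*x2*x4*y0*y1*y4 + (-10)*x2*x4^2*y0*y1*y4 + (-2)*x2*y0*y1*y4^3 + 8*x1^2*x4*y0*y2*y4 + (-10)*x1*x4^2*y0*y2*y4 + (-2)*x1*y0*y2*y4^3 + (-4)*x1*y0*y4^4 + 12*x1^2*x3*y0*y4^2 + (-14)*x1*x3*x4*y0*y4^2 + 8*x3*x4^2*y0*y4^2 + 6*x3*y0*y4^4 + (-4)*x1^2*x3*y0*y2*y4 + 4*x1*x3*x4*y0*y2*y4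 + (-2)*x3*x4^2*y0*y2*y4 + (-2)*x3*y0*y2*y4^3 + (-8)*x1^2*x4*y0*y3*y4 + 10*x1*x4^2*y0*y3*y4 + (-4)*x4^3*y0*y3*y4 + (-4)*x4*y0*y3*y4^3 + 4*x1^2*x2*y0*y3*y4 + (-4)*x1*x2*x4*y0*y3*y4 + 2*x2*x4^2*y0*y3*y4 + 2*x2*y0*y3*y4^3 + 8*x1^2*x2^2*x4*y4 + (-2)*x1*x2^2*x4^2*y4 + 4*x1*x2^2*y1*y4^2 + (-2)*x1*x2^2*y4^3 + (-8)*x1^2*x2*x3*x4*y4 + 2*x1*x2*x3*x4^2*y4 + (-4)*x1*x2*x3*y1*y4^2 + 2*x1*x2*x3*y4^3 + 8*x1^2*x3^2*x4*y4 + (-2)*x1*x3^2*x4^2*y4 + 4*x1*x3^2*y1*y4^2 + (-2)*x1*x3^2*y4^3 + (-16)*x1^2*x2*x4^2*y4 + 8*x1^2*x4*y2^2*y4 + 4*x1*x2*x4^3*y4 + (-2)*x1*x4^4*y4 + (-2)*x1*x4^2*y2^2*y4 + 4*x1*x4^2*y2*y4^2 + (-4)*x1*x4^2*y4^3 + 4*x1*y1*y2^2*y4^2 + 4*x1*x2*x4*y4^3 + (-2)*x1*y2^2*y4^3 + 4*x1*y2*y4^4 + (-2)*x1*y4^5 + (-8)*x1^2*x4*y2*y3*y4 + 12*x1^2*x4*y3*y4^2 + 2*x1*x4^2*y2*y3*y4 + (-4)*x1*y1*y2*y3*y4^2 + 4*x1*y1*y3*y4^3 + 2*x1*y2*y3*y4^3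 + (-2)*x1*y3*y4^4 + 8*x1^2*x4*y3^2*y4 + (-2)*x1*x4^2*y3^2*y4 + 4*x1*y1*y3^2*y4^2 + (-2)*x1*y3^2*y4^3 + 8*x0*x1^2*x4^2*y4 + (-4)*x1^2*x2^2*x4*y0 + 6*x1*x2^2*x4^2*y0 + (-4)*x1*x2^2*y0*y1*y4 + 2*x1*x2^2*y0*y4^2 + 4*x1^2*x2*x3*x4*y0 + (-6)*x1*x2*x3*x4^2*y0 + 4*x1*x2*x3*y0*y1*y4 + (-2)*x1*x2*x3*y0*y4^2 + (-4)*x1^2*x3^2*x4*y0 + 6*x1*x3^2*x4^2*y0 + (-4)*x1*x3^2*y0*y1*y4 + 2*x1*x3^2*y0*y4^2 + 4*x1^2*x2*x4^2*y0 + (-4)*x1^2*x4*y0*y2^2 + (-10)*x1*x2*x4^3*y0 + 6*x1*x4^2*y0*y2^2 + (-4)*x1*y0*y1*y2^2*y4 + (-2)*x1*x2*x4*y0*y4^2 + 2*x1*y0*y2^2*y4^2 + 4*x1^2*x4*y0*y2*y3 + (-6)*x1*x4^2*y0*y2*y3 + 4*x1*y0*y1*y2*y3*y4 + (-4)*x1*y0*y1*y3*y4^2 + (-2)*x1*y0*y2*y3*y4^2 + 2*x1*y0*y3*y4^3 + (-4)*x1^2*x4*y0*y3^2 + 6*x1*x4^2*y0*y3^2 + (-4)*x1*y0*y1*y3^2*y4 + 2*x1*y0*y3^2*y4^2 + 4*x1^2*x3*x4^2*y0 + (-6)*x1*x3*x4^3*y0 + (-4)*x1^2*x2*y0*y4^2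 + (-4)*x0*x1^2*x2^2*y4 + (-4)*x0*x1*x2^2*x4*y4 + 2*x0*x2^2*x4^2*y4 + (-6)*x0*x2^2*y1*y4^2 + 2*x0*x2^2*y4^3 + 4*x0*x1^2*x2*x3*y4 + 4*x0*x1*x2*x3*x4*y4 + (-2)*x0*x2*x3*x4^2*y4 + 6*x0*x2*x3*y1*y4^2 + (-2)*x0*x2*x3*y4^3 + (-4)*x0*x1^2*x3^2*y4 + (-4)*x0*x1*x3^2*x4*y4 + 2*x0*x3^2*x4^2*y4 + (-6)*x0*x3^2*y1*y4^2 + 2*x0*x3^2*y4^3 + (-4)*x0*x1^2*y2^2*y4 + 6*x0*x1*x2*x4^2*y4 + (-4)*x0*x1*x4*y2^2*y4 + (-4)*x0*x2*x4^3*y4 + 2*x0*x4^4*y4 + 2*x0*x4^2*y2^2*y4 + (-4)*x0*x4^2*y2*y4^2 + 4*x0*x4^2*y4^3 + (-6)*x0*y1*y2^2*y4^2 + 10*x0*y1*y2*y4^3 + (-4)*x0*x2*x4*y4^3 + 2*x0*y2^2*y4^3 + (-4)*x0*y2*y4^4 + 2*x0*y4^5 + 4*x0*x1^2*y2*y3*y4 + (-4)*x0*x1^2*y3*y4^2 + 4*x0*x1*x4*y2*y3*y4 + (-2)*x0*x4^2*y2*y3*y4 + 6*x0*y1*y2*y3*y4^2 + (-6)*x0*y1*y3*y4^3 + (-2)*x0*y2*y3*y4^3 + 2*x0*y3*y4^4 + (-4)*x0*x1^2*y3^2*y4 + (-4)*x0*x1*x4*y3^2*y4 + 2*x0*x4^2*y3^2*y4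 + (-6)*x0*y1*y3^2*y4^2 + 2*x0*y3^2*y4^3 + (-2)*x0*x1*x2*y4^3 + 2*x0*x4^2*y1*y2*y4 + (-4)*x1*x2^2*x4^2*y1 + 2*x2^2*x4^3*y1 + 2*x2^2*x4*y1*y4^2 + 4*x1*x2*x3*x4^2*y1 + (-2)*x2*x3*x4^3*y1 + (-2)*x2*x3*x4*y1*y4^2 + (-4)*x1*x3^2*x4^2*y1 + 2*x3^2*x4^3*y1 + 2*x3^2*x4*y1*y4^2 + (-4)*x1*x4^4*y1 + (-4)*x1*x4^2*y1*y2^2 + (-4)*x2*x4^4*y1 + 2*x4^5*y1 + 2*x4^3*y1*y2^2 + (-4)*x4^3*y1*y2*y4 + 4*x4^3*y1*y4^2 + (-4)*x2*x4^2*y1*y4^2 + 2*x4*y1*y2^2*y4^2 + (-4)*x4*y1*y2*y4^3 + 2*x4*y1*y4^4 + 4*x1*x4^2*y1*y2*y3 + (-2)*x4^3*y1*y2*y3 + (-2)*x4*y1*y2*y3*y4^2 + (-4)*x1*x4^2*y1*y3^2 + 2*x4^3*y1*y3^2 + 2*x4*y1*y3^2*y4^2 + 4*x1*x3*x4^3*y1 + (-2)*x3*x4^4*y1 + 4*x0*x1*x2^2*x4*y1 + (-2)*x0*x2^2*x4^2*y1 + (-4)*x0*x1*x2*x3*x4*y1 + 2*x0*x2*x3*x4^2*y1 + 4*x0*x1*x3^2*x4*y1 + (-2)*x0*x3^2*x4^2*y1 + 4*x0*x1*x4*y1*y2^2 + (-2)*x0*x4^2*y1*y2^2 + (-4)*x0*x1*x4*y1*y2*y3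 + 2*x0*x4^2*y1*y2*y3 + 4*x0*x1*x4*y1*y3^2 + (-2)*x0*x4^2*y1*y3^2 + (-4)*x0*x1*x3*x4^2*y1 + 2*x0*x3*x4^3*y1 + (-2)*x2^2*x4^3*y0 + 4*x2^2*x4*y0*y1*y4 + (-2)*x2^2*x4*y0*y4^2 + 2*x2*x3*x4^3*y0 + (-4)*x2*x3*x4*y0*y1*y4 + 2*x2*x3*x4*y0*y4^2 + (-2)*x3^2*x4^3*y0 + 4*x3^2*x4*y0*y1*y4 + (-2)*x3^2*x4*y0*y4^2 + 4*x2*x4^4*y0 + (-2)*x4^5*y0 + (-2)*x4^3*y0*y2^2 + 4*x4^3*y0*y2*y4 + (-4)*x4^3*y0*y4^2 + 4*x4*y0*y1*y2^2*y4 + (-6)*x4*y0*y1*y2*y4^2 + 4*x2*x4^2*y0*y4^2 + (-2)*x4*y0*y2^2*y4^2 + 4*x4*y0*y2*y4^3 + (-2)*x4*y0*y4^4 + 2*x4^3*y0*y2*y3 + (-4)*x4*y0*y1*y2*y3*y4 + 2*x4*y0*y2*y3*y4^2 + (-2)*x4^3*y0*y3^2 + 4*x4*y0*y1*y3^2*y4 + (-2)*x4*y0*y3^2*y4^2 + 2*x3*x4^4*y0 + 2*x4^3*y0*y1*y2 + 2*x1*x4^2*y4*r + 8*x1^2*x3*y4*r + 14*x1*x3*x4*y0*r + (-14)*x1*x4^2*y0*r + (-8)*x1^2*x3*y0*r + 4*x1^2*x4*y0*r + 8*x0*x3*x4*y4*r + (-10)*x0*x4^2*y4*r + (-2)*x0*x1*x3*y4*r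 + 12*x0*x1*x4*y4*r + 6*x3*x4^2*y1*r + (-6)*x4^3*y1*r + (-8)*x1*x3*x4*y1*r + 8*x1*x4^2*y1*r + (-6)*x0*x3*x4*y1*r + 6*x0*x4^2*y1*r + 8*x0*x1*x3*y1*r + (-4)*x0*x1*x4*y1*r + (-6)*x3*x4^2*y0*r + 6*x4^3*y0*r + (-2)*x1*x3*x4*y2*r + (-2)*x1*x4^2*y3*r + 2*x1*x2*x4*y3*r + (-2)*x0*x1*x2*y4*r + (-4)*x0*x1^2*y4*r + (-2)*x0*x1*x3*y2*r + (-2)*x0*x1*x4*y3*r + 2*x0*x1*x2*y3*r + 2*x0*x2*x4*y1*r + 8*x0*x1^2*x2*x4*y4 + (-8)*x0*x2*x4*y4*r + (-2)*x0*x1*x4*y2*r + (-2)*x0*x3*x4*y2*r + (-2)*x0*x4^2*y3*r + 2*x0*x2*x4*y3*r + 10*x0*y1*y4^2*r + (-10)*x0*y4^3*r + (-4)*x4*y0*y1*y4*r + 6*x4*y0*y4^2*r + 4*x1^2*x2*y4*r + 10*x2*x4^2*y4*r + (-2)*x2*y1*y4^2*r + 2*x2*y4^3*r + 2*x1*y2*y4^2*r + 2*x1*y4^3*r + 6*x3*y1*y4^2*r + (-12)*x1^2*x3*y4^3 + 6*x3*y4^3*r + (-2)*x3*y1*y2*y4*r + 4*x1^2*x3*y2*y4^2 + (-2)*x3*y2*y4^2*r + (-6)*x4*y3*y4^2*r + 2*x2*y1*y3*y4*r + (-4)*x1^2*x2*y3*y4^2 + 2*x2*y3*y4^2*r + (-8)*x1*y1*y4^2*r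 + (-6)*x4*y1*y4^2*r + 2*x1*x2*x4*y0*r + 2*x2*x4^2*y0*r + 2*x2*y0*y1*y4*r + 2*x2*y0*y4^2*r + (-2)*x1*y0*y2*y4*r + 6*x3*y0*y1*y4*r + (-6)*x3*y0*y4^2*r + (-2)*x3*y0*y1*y2*r + 2*x3*y0*y2*y4*r + (-2)*x4*y0*y1*y3*r + 2*x2*y0*y1*y3*r + (-2)*x2*y0*y3*y4*r + (-16)*x1^2*x4*y4*r + (-4)*x1*x2*x4*y1*r + (-2)*x2*x4^2*y1*r + 2*x1*x4^2*y2*r + 4*x1*y1*y2*y4*r + (-2)*x3*x4^2*y4*r + 2*x3*x4^2*y2*r + 2*x4^3*y3*r + (-2)*x2*x4^2*y3*r + (-2)*x1*x2^2*y4*r + 2*x1*x2*x3*y4*r + (-2)*x1*x3^2*y4*r + (-2)*x1*y2^2*y4*r + 2*x1*y2*y3*y4*r + (-2)*x1*y3*y4^2*r + (-2)*x1*y3^2*y4*r + (-2)*x1*y0*y4^2*r + 2*x1*x2^2*y0*r + (-2)*x1*x2*x3*y0*r + 2*x1*x3^2*y0*r + 2*x1*y0*y2^2*r + (-4)*x1*y0*y1*y4*r + (-2)*x1*y0*y2*y3*r + 2*x1*y0*y3*y4*r + 2*x1*y0*y3^2*r + 6*x0*x2^2*y4*r + (-6)*x0*x2*x3*y4*r + 6*x0*x3^2*y4*r + 6*x0*y2^2*y4*r + (-6)*x0*y2*y4^2*r + (-6)*x0*y2*y3*y4*r + 6*x0*y3*y4^2*r + 6*x0*y3^2*y4*r +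 (-2)*x0*y1*y2*y4*r + 2*x2^2*x4*y1*r + (-4)*x2^2*x4*y4*r + (-2)*x2*x3*x4*y1*r + 4*x2*x3*x4*y4*r + 2*x3^2*x4*y1*r + (-4)*x3^2*x4*y4*r + 2*x4*y1*y2^2*r + (-4)*x4*y2^2*y4*r + 6*x4*y2*y4^2*r + (-2)*x4*y1*y2*y3*r + 4*x4*y2*y3*y4*r + 2*x4*y1*y3^2*r + (-4)*x4*y3^2*y4*r + (-2)*x4^3*y2*r + (-2)*x0*x2^2*y1*r + 2*x0*x2*x3*y1*r + (-2)*x0*x3^2*y1*r + (-2)*x0*y1*y2^2*r + 2*x0*y1*y2*y3*r + (-2)*x0*y1*y3*y4*r + (-2)*x0*y1*y3^2*r + 2*x0*x4^2*y2*r + (-2)*x2^2*x4*y0*r + 2*x2*x3*x4*y0*r + (-2)*x3^2*x4*y0*r + (-2)*x4*y0*y2^2*r + 2*x4*y0*y2*y3*r + (-2)*x4*y0*y3^2*r + 2*x4*y0*y1*y2*r + (-2)*x2*y4*r^2 + 4*x1*y4*r^2 + 4*x4*y4*r^2 + (-2)*x2*y0*r^2 + 2*x2*y1*r^2 + (-2)*x1*y2*r^2 + (-6)*x3*y4*r^2 + 2*x3*y2*r^2 + 2*x4*y3*r^2 + (-2)*x2*y3*r^2 + 2*x1*y0*r^2 + 4*x1^2*x4*y2*r + (-2)*x4*y2*r^2 + (-2)*x0*y1*r^2 + 2*x0*y2*r^2)*e2 + ((-16)*x1^2*x2*x4^2*y4 + 8*x1^2*x4^3*y4 + (-16)*x1^2*x4*y2*y4^2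 + 8*x1^2*x4*y4^3 + 4*x1*x2*x4^3*y4 + (-2)*x1*x4^4*y4 + 4*x1*x4^2*y2*y4^2 + (-4)*x1*x4^2*y4^3 + (-8)*x1*x2*x4*y1*y4^2 + (-8)*x1*y1*y2*y4^3 + 4*x1*y1*y4^4 + 4*x1*x2*x4*y4^3 + 4*x1*y2*y4^4 + (-2)*x1*y4^5 + 8*x1^2*x2*x4^2*y0 + (-4)*x1^2*x4^3*y0 + 8*x1^2*x4*y0*y2*y4 + (-4)*x1^2*x4*y0*y4^2 + (-12)*x1*x2*x4^3*y0 + 6*x1*x4^4*y0 + (-12)*x1*x4^2*y0*y2*y4 + 8*x1*x4^2*y0*y4^2 + 8*x1*x2*x4*y0*y1*y4 + (-4)*x1*x4^2*y0*y1*y4 + 8*x1*y0*y1*y2*y4^2 + (-4)*x1*y0*y1*y4^3 + (-4)*x1*x2*x4*y0*y4^2 + (-4)*x1*y0*y2*y4^3 + 2*x1*y0*y4^4 + 8*x0*x1^2*x2*x4*y4 + (-4)*x0*x1^2*x4^2*y4 + 8*x0*x1^2*y2*y4^2 + (-4)*x0*x1^2*y4^3 + 8*x0*x1*x2*x4^2*y4 + (-4)*x0*x1*x4^3*y4 + 8*x0*x1*x4*y2*y4^2 + (-4)*x0*x1*x4*y4^3 + (-4)*x0*x2*x4^3*y4 + 2*x0*x4^4*y4 + (-4)*x0*x4^2*y2*y4^2 + 4*x0*x4^2*y4^3 + 12*x0*x2*x4*y1*y4^2 + (-8)*x0*x4^2*y1*y4^2 + 12*x0*y1*y2*y4^3 +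 (-6)*x0*y1*y4^4 + (-4)*x0*x2*x4*y4^3 + (-4)*x0*y2*y4^4 + 2*x0*y4^5 + 8*x1*x2*x4^3*y1 + (-4)*x1*x4^4*y1 + 8*x1*x4^2*y1*y2*y4 + (-4)*x2*x4^4*y1 + 2*x4^5*y1 + (-4)*x4^3*y1*y2*y4 + 4*x4^3*y1*y4^2 + (-4)*x2*x4^2*y1*y4^2 + (-4)*x4*y1*y2*y4^3 + 2*x4*y1*y4^4 + (-8)*x0*x1*x2*x4^2*y1 + 4*x0*x1*x4^3*y1 + (-8)*x0*x1*x4*y1*y2*y4 + 4*x0*x1*x4*y1*y4^2 + 4*x0*x2*x4^3*y1 + (-2)*x0*x4^4*y1 + 4*x0*x4^2*y1*y2*y4 + 4*x2*x4^4*y0 + (-2)*x4^5*y0 + 4*x4^3*y0*y2*y4 + (-4)*x4^3*y0*y4^2 + (-8)*x2*x4^2*y0*y1*y4 + 4*x4^3*y0*y1*y4 + (-8)*x4*y0*y1*y2*y4^2 + 4*x4*y0*y1*y4^3 + 4*x2*x4^2*y0*y4^2 + 4*x4*y0*y2*y4^3 + (-2)*x4*y0*y4^4 + 8*x1^2*x4*y4*r + (-4)*x1*x4^2*y4*r + 4*x1*x2*x4*y4*r + 4*x1*y2*y4^2*r + (-4)*x1*y4^3*r + 4*x1*y1*y4^2*r + (-4)*x1^2*x4*y0*r + 8*x1*x4^2*y0*r + (-4)*x1*x2*x4*y0*r + (-4)*x1*y0*y2*y4*r + 4*x1*y0*y4^2*r + (-4)*x1*y0*y1*y4*r + (-4)*x0*x1^2*y4*r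 + (-4)*x0*x1*x4*y4*r + 8*x0*x4^2*y4*r + (-12)*x0*x2*x4*y4*r + (-12)*x0*y2*y4^2*r + 8*x0*y4^3*r + (-8)*x0*y1*y4^2*r + (-4)*x1*x4^2*y1*r + 4*x4^3*y1*r + (-4)*x2*x4^2*y1*r + (-4)*x4*y1*y2*y4*r + 4*x4*y1*y4^2*r + 8*x2*x4^2*y4*r + (-4)*x4^3*y4*r + 8*x4*y2*y4^2*r + (-4)*x4*y4^3*r + 4*x0*x1*x4*y1*r + (-4)*x0*x4^2*y1*r + 4*x0*x2*x4*y1*r + 4*x0*y1*y2*y4*r + (-4)*x4^3*y0*r + 4*x2*x4^2*y0*r + 4*x4*y0*y2*y4*r + (-4)*x4*y0*y4^2*r + 4*x4*y0*y1*y4*r + (-2)*x1*y4*r^2 + 2*x1*y0*r^2 + 6*x0*y4*r^2 + 2*x4*y1*r^2 + (-4)*x4*y4*r^2 + (-2)*x0*y1*r^2 + (-2)*x4*y0*r^2)*e3 + (4*x1^2*x4^3*y0 + (-12)*x1^2*x2*x4^2*y0 + (-8)*x1^2*x4*y0*y2*y4 + 4*x1^2*x4*y0*y4^2 + (-4)*x0*x1^2*x4^2*y2 + 4*x0*x1^2*x4^2*y4 + (-8)*x0*x1*x2^2*x4*y1 + 12*x0*x1*x2*x4^2*y1 + (-4)*x0*x1*x4^3*y1 + 8*x0*x1*x4*y1*y2*y4 + (-4)*x0*x1*x4*y1*y4^2 + (-2)*x0*x1*x2*x4^2*y4 + 2*x0*x1*x4*y2*y4^2 + (-4)*x1*x4^2*y0*y1*y2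 + 4*x1*x4^2*y0*y1*y4 + 6*x1*x2*x4^3*y0 + 6*x1*x4^2*y0*y2*y4 + (-4)*x1*x4^2*y0*y4^2 + (-4)*x1^2*x3*x4^2*y2 + 2*x1*x3*x4^3*y2 + (-8)*x1*x2^2*x3*x4*y1 + (-4)*x1*x2*x3*x4^2*y1 + 4*x1*x3*x4^3*y1 + (-16)*x1*x3*x4*y1*y2*y4 + 4*x1*x3*x4*y1*y4^2 + 2*x1*x2*x3*x4^2*y4 + 2*x1*x3*x4*y2*y4^2 + (-4)*x1*x2*x3*x4^2*y2 + (-4)*x1^2*x4^3*y3 + 4*x1*x4^2*y1*y2*y3 + (-4)*x1*x4^2*y1*y3*y4 + 4*x1*x2^2*x4^2*y3 + (-6)*x1*x2*x4^3*y3 + (-2)*x1*x4^2*y2*y3*y4 + 4*x1*x4^2*y3*y4^2 + 12*x1^2*x2*x4^2*y3 + (-8)*x1*x2*x4*y1*y2*y3 + 16*x1*x2*x4*y1*y3*y4 + (-6)*x1*x2*x4*y3*y4^2 + (-8)*x0*x1*x2*y1*y2*y4 + 4*x0*x1*x2*y1*y4^2 + 8*x0*x1^2*x2*x4*y2 + (-12)*x0*x1^2*y2*y4^2 + 4*x0*x1^2*x3*x4*y2 + 2*x0*x1*x3*x4^2*y2 + 8*x0*x1*x2^2*x3*y1 + 4*x0*x1*x2*x3*x4*y1 + (-4)*x0*x1*x3*x4^2*y1 + 12*x0*x1*x3*y1*y2*y4 + (-4)*x0*x1*x3*y1*y4^2 + (-4)*x0*x1*x2^2*x3*y4 + (-6)*x0*x1*x3*y2*y4^2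 + 2*x0*x1*x3*y4^3 + (-4)*x0*x1*x2*x3*x4*y2 + (-4)*x0*x1*x4*y1*y2*y3 + 4*x0*x1*x2^2*x4*y3 + (-6)*x0*x1*x2*x4^2*y3 + 2*x0*x1*x4*y3*y4^2 + (-12)*x0*x1^2*x2*x4*y3 + 8*x0*x1*x2*y1*y2*y3 + (-4)*x0*x1*x2*y1*y3*y4 + (-4)*x0*x1*x2*y2*y3*y4 + 2*x0*x1*x2*y3*y4^2 + (-6)*x0*x2*x4^3*y1 + 8*x0*x2*x4*y1*y2*y4 + (-6)*x0*x2*x4*y1*y4^2 + (-2)*x0*x3*x4^3*y2 + (-4)*x0*x2^2*x3*x4*y1 + (-2)*x0*x2*x3*x4^2*y1 + 2*x0*x3*x4^3*y1 + 2*x0*x3*x4*y1*y4^2 + (-2)*x0*x2*x3*x4^2*y4 + (-2)*x0*x3*x4*y2*y4^2 + 4*x0*x2*x3*x4^2*y2 + 2*x0*x4^2*y1*y2*y3 + 6*x0*x4^2*y1*y3*y4 + (-4)*x0*x2^2*x4^2*y3 + 6*x0*x2*x4^3*y3 + 2*x0*x4^2*y2*y3*y4 + (-4)*x0*x4^2*y3*y4^2 + (-4)*x0*x2*x4*y1*y2*y3 + (-16)*x0*x2*x4*y1*y3*y4 + 6*x0*x2*x4*y3*y4^2 + (-12)*x1*y0*y1*y2*y4^2 + 4*x1*y0*y1*y4^3 + (-6)*x0*x4^2*y1*y2*y4 + 4*x0*x4^2*y1*y4^2 + (-4)*x0*x2^2*y1*y4^2 + (-6)*x0*y1*y2*y4^3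 + 2*x0*y1*y4^4 + 2*x4^3*y0*y1*y2 + 8*x2^2*x4*y0*y1*y4 + 2*x4*y0*y1*y2*y4^2 + 2*x2*x3*x4^3*y1 + 6*x3*x4^2*y1*y2*y4 + (-4)*x3*x4^2*y1*y4^2 + 4*x2^2*x3*y1*y4^2 + 2*x2*x3*x4*y1*y4^2 + 6*x3*y1*y2*y4^3 + (-2)*x3*y1*y4^4 + (-2)*x4^3*y1*y2*y3 + (-2)*x2*x4^2*y1*y3*y4 + (-2)*x4*y1*y2*y3*y4^2 + 4*x2*x4^2*y1*y2*y3 + 4*x2*y1*y2*y3*y4^2 + (-2)*x2*y1*y3*y4^3 + 8*x1*x2*x4*y0*y1*y2 + 4*x1*x3*x4*y0*y1*y2 + (-2)*x3*x4^2*y0*y1*y2 + 4*x2^2*x3*y0*y1*y4 + 6*x3*y0*y1*y2*y4^2 + (-2)*x3*y0*y1*y4^3 + 4*x2*x3*x4*y0*y1*y2 + 4*x1*x4^2*y0*y1*y3 + (-4)*x2^2*x4*y0*y1*y3 + 6*x2*x4^2*y0*y1*y3 + (-2)*x4*y0*y1*y3*y4^2 + (-12)*x1*x2*x4*y0*y1*y3 + 4*x2*y0*y1*y2*y3*y4 + (-2)*x2*y0*y1*y3*y4^2 + 4*x2*y0*y1*y2*y4^2 + (-2)*x2*y0*y1*y4^3 + (-8)*x1*x2*x4*y0*y2*y4 + 6*x1*y0*y2*y4^3 + (-8)*x1^2*x2^2*x3*y0 + (-4)*x1^2*x2*x3*x4*y0 + 4*x1^2*x3*x4^2*y0 + (-12)*x1^2*x3*y0*y2*y4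 + 4*x1^2*x3*y0*y4^2 + 12*x1*x2^2*x3*x4*y0 + 6*x1*x2*x3*x4^2*y0 + (-6)*x1*x3*x4^3*y0 + 16*x1*x3*x4*y0*y2*y4 + (-6)*x1*x3*x4*y0*y4^2 + (-2)*x2*x3*x4^3*y0 + (-6)*x3*x4^2*y0*y2*y4 + 4*x3*x4^2*y0*y4^2 + (-4)*x2^2*x3*y0*y4^2 + (-2)*x2*x3*x4*y0*y4^2 + (-6)*x3*y0*y2*y4^3 + 2*x3*y0*y4^4 + 4*x1^2*x4*y0*y2*y3 + (-6)*x1*x4^2*y0*y2*y3 + (-2)*x1*x4^2*y0*y3*y4 + 2*x4^3*y0*y2*y3 + 2*x2*x4^2*y0*y3*y4 + 2*x4*y0*y2*y3*y4^2 + (-8)*x1^2*x2*y0*y2*y3 + 4*x1^2*x2*y0*y3*y4 + 12*x1*x2*x4*y0*y2*y3 + (-4)*x2*x4^2*y0*y2*y3 + (-4)*x2*y0*y2*y3*y4^2 + 2*x2*y0*y3*y4^3 + 8*x1^2*x2*x3*x4*y2 + 8*x1*x2*x3*y1*y2*y4 + (-4)*x1*x2*x3*y1*y4^2 + (-4)*x1*x2*x3*y2*y4^2 + 2*x1*x2*x3*y4^3 + 4*x1*y1*y2*y3*y4^2 + (-2)*x1*y2*y3*y4^3 + (-8)*x1^2*x2^2*x4*y3 + (-4)*x1^2*x4*y3*y4^2 + (-8)*x1*x2^2*y1*y3*y4 + (-4)*x1*y1*y3*y4^3 + 4*x1*x2^2*y3*y4^2 + 2*x1*y3*y4^4 + 2*x0*x1*x4^3*y2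 + (-8)*x1*x2*x4*y0*y1*y4 + 6*x1*x2*x4*y0*y4^2 + (-2)*x1*y0*y4^4 + (-8)*x0*x1^2*x2*x4*y4 + 4*x0*x1^2*y4^3 + (-8)*x1*x2*x3*y0*y1*y2 + 4*x1*x2*x3*y0*y1*y4 + 4*x1*x2*x3*y0*y2*y4 + (-2)*x1*x2*x3*y0*y4^2 + (-4)*x1*y0*y1*y2*y3*y4 + 2*x1*y0*y2*y3*y4^2 + 8*x1*x2^2*y0*y1*y3 + 4*x1*y0*y1*y3*y4^2 + (-4)*x1*x2^2*y0*y3*y4 + (-2)*x1*y0*y3*y4^3 + 8*x1^2*x2*y0*y2*y4 + (-4)*x1^2*x2*y0*y4^2 + (-8)*x0*x1^2*x2*x3*y2 + 4*x0*x1^2*x2*x3*y4 + (-12)*x0*x2*x3*y1*y2*y4 + 6*x0*x2*x3*y1*y4^2 + 4*x0*x2*x3*y2*y4^2 + (-2)*x0*x2*x3*y4^3 + (-4)*x0*x1^2*y2*y3*y4 + (-6)*x0*y1*y2*y3*y4^2 + 2*x0*y2*y3*y4^3 + 2*x0*x1*x3*x4^2*y4 + 8*x0*x1^2*x2^2*y3 + 4*x0*x1^2*y3*y4^2 + 2*x0*x1*x4^3*y3 + 12*x0*x2^2*y1*y3*y4 + 6*x0*y1*y3*y4^3 + (-4)*x0*x2^2*y3*y4^2 + (-2)*x0*y3*y4^4 + 4*x0*x1*x2*y2*y4^2 + (-2)*x0*x1*x2*y4^3 + (-2)*x2*x4^2*y0*y1*y4 + (-2)*x3*x4^2*y0*y1*y4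 + (-2)*x4^3*y0*y1*y3 + (-2)*x1*x2*x3*y4*r + (-4)*x1*x2*x4*y2*r + (-8)*x1^2*x3*y4*r + (-4)*x1^2*x2*y4*r + (-4)*x1^2*x4*y2*r + 2*x1*x3*x4*y2*r + 8*x1*x3*x4*y1*r + 4*x1*x2*x4*y1*r + 2*x1*x2*x3*y0*r + 8*x1^2*x3*y0*r + 8*x0*x2*x3*y2*r + 14*x0*x2*x4*y3*r + (-8)*x0*x2^2*y3*r + (-4)*x0*x2*x4*y2*r + (-2)*x0*x2*x3*y1*r + 2*x0*x1*x3*y2*r + 2*x0*x1*x2*y4*r + (-2)*x0*x1*x2*y3*r + 2*x0*x1*x4*y2*r + (-6)*x0*x3*x4*y2*r + 6*x0*x3*x4*y1*r + (-6)*x0*x2*x4*y1*r + 2*x2*x3*x4*y1*r + (-8)*x0*x1*x3*y1*r + (-2)*x2*x3*x4*y0*r + (-14)*x1*x3*x4*y0*r + 2*x1*x2*x4*y0*r + (-8)*x0*x1*x4*y4*r + 8*x0*x1*x2^2*x4*y4 + 2*x1*x4^2*y0*r + 8*x1^2*x4*y4*r + 2*x1*x4^2*y3*r + (-2)*x1*x2*x4*y3*r + (-8)*x0*x1^2*x2^2*y4 + 8*x0*x1^2*y4*r + 2*x0*x1*x3*y4*r + 2*x0*x1*x4*y3*r + 8*x0*x2*x4*y4*r + 4*x0*x1^2*x4^2*y3 + (-6)*x0*x4^2*y3*r + 6*x1*y0*y2*y4*r + (-6)*x1*y0*y4^2*r + (-8)*x1*x2^2*y0*y1*y4 + 8*x1*y0*y1*y4*r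 + 2*x0*x4^2*y1*r + (-2)*x0*y1*y2*y4*r + 2*x0*y1*y4^2*r + (-2)*x0*x4^2*y4*r + 10*x0*y2*y4^2*r + (-2)*x0*y4^3*r + 4*x0*x2^2*x4^2*y1 + 2*x0*x4^2*y2*r + (-2)*x4*y0*y1*y2*r + 2*x2*x4^2*y4*r + 4*x2*y1*y2*y4*r + (-2)*x2*y1*y4^2*r + (-8)*x2^2*x4*y4*r + (-4)*x2*y2*y4^2*r + 2*x2*y4^3*r + (-4)*x1*y1*y2*y4*r + 4*x2^2*x3*x4^2*y1 + (-6)*x3*x4^2*y1*r + 2*x3*y1*y2*y4*r + (-6)*x3*y1*y4^2*r + 8*x1^2*x2^2*x3*y4 + (-4)*x2^2*x3*y4*r + (-4)*x1^2*x3*x4^2*y4 + 2*x3*x4^2*y4*r + 12*x1^2*x3*y2*y4^2 + (-6)*x3*y2*y4^2*r + (-4)*x1^2*x3*y4^3 + 2*x3*y4^3*r + 2*x3*x4^2*y2*r + 2*x4*y1*y2*y3*r + 4*x2^2*x4*y3*r + (-6)*x2*x4^2*y3*r + (-2)*x2*y1*y3*y4*r + 8*x1^2*x2*y2*y3*y4 + (-4)*x2*y2*y3*y4*r + (-4)*x1^2*x2*y3*y4^2 + 2*x2*y3*y4^2*r + (-4)*x2*y0*y2*y4*r + 2*x2*y0*y4^2*r + (-6)*x3*y0*y1*y4*r + 6*x3*y0*y4^2*r + 2*x3*y0*y1*y2*r + 2*x4*y0*y1*y3*r + (-2)*x4*y0*y2*y3*r + (-2)*x2*y0*y1*y3*r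 + 2*x1*y2*y4^2*r + (-4)*x2*x4^2*y0*y1*y2 + (-2)*x2*y0*y1*y4*r + 4*x1*x2^2*y0*y4^2 + (-4)*x2^2*x3*x4^2*y0 + 6*x3*x4^2*y0*r + (-2)*x3*y0*y2*y4*r + 2*x2*y0*y3*y4*r + (-4)*x2*x3*x4*y2*r + 2*x4^3*y3*r + 2*x4*y3*y4^2*r + (-2)*x1*y2*y3*y4*r + 2*x1*x4^2*y2*r + (-2)*x1*x4^2*y4*r + 4*x1*y1*y4^2*r + (-2)*x1*y4^3*r + 2*x1*y3*y4^2*r + 2*x1*y0*y2*y3*r + (-2)*x1*y0*y3*y4*r + (-2)*x0*x2*x3*y4*r + 6*x0*y2*y3*y4*r + (-6)*x0*y3*y4^2*r + (-4)*x0*x1*x2*x4^2*y2 + 4*x2^2*x4*y1*r + 2*x4^3*y1*r + (-2)*x2*x4^2*y1*r + 2*x4*y1*y4^2*r + (-2)*x4^3*y2*r + (-2)*x4*y2*y4^2*r + (-2)*x0*y1*y2*y3*r + 2*x0*y1*y3*y4*r + (-4)*x2^2*x4*y0*r + (-2)*x4^3*y0*r + 2*x2*x4^2*y0*r + (-2)*x4*y0*y4^2*r + (-4)*x1*y0*r^2 + 4*x0*y1*r^2 + 4*x0*x2^2*y4*r + (-6)*x0*y4*r^2 + (-2)*x0*y2*r^2 + 2*x0*x4^4*y1 + 8*x1^2*x2^2*x4*y0 + 2*x4*y0*r^2 + (-2)*x2*y1*r^2 + 4*x2*x4^2*y2*r + 2*x2*y4*r^2 + 2*x1*y2*r^2 +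 6*x3*y4*r^2 + (-2)*x3*y2*r^2 + (-2)*x3*x4^4*y1 + (-2)*x4*y3*r^2 + 2*x2*y3*r^2 + (-2)*x4*y1*r^2 + 2*x4*y2*r^2 + 2*x2*y0*r^2 + (-4)*x1*x2^2*x4^2*y0 + 2*x3*x4^4*y0 + 4*x1*x2^2*y4*r + (-4)*x1*x4^2*y1*r + (-2)*x1*y4*r^2 + 2*x1*x4^4*y3 + (-2)*x1*x4^4*y0 + (-2)*x0*x4^4*y3)*e4).
  { intros e0 e1 e2 e3 e4 -> -> -> -> ->. ring. }
  specialize (E 0 0 0 0 0 ltac:(lra) ltac:(lra) ltac:(lra) ltac:(lra) ltac:(lra)).
  lra.
Qed.
Lemma tri_core (x0 y0 x1 y1 x2 y2 r : R) :
  x0^2+y0^2 = r -> x1^2+y1^2 = r -> x2^2+y2^2 = r ->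
  ((x0-x1)^2+(y0-y1)^2)*((x1-x2)^2+(y1-y2)^2)*((x2-x0)^2+(y2-y0)^2)
  = 4*r*((x1-x0)*(y2-y0)-(y1-y0)*(x2-x0))^2.
Proof. intros h0 h1 h2.
  assert (E: forall e0 e1 e2, e0 = x0^2+y0^2-r -> e1 = x1^2+y1^2-r -> e2 = x2^2+y2^2-r ->
  ((x0-x1)^2+(y0-y1)^2)*((x1-x2)^2+(y1-y2)^2)*((x2-x0)^2+(y2-y0)^2)
  - 4*r*((x1-x0)*(y2-y0)-(y1-y0)*(x2-x0))^2 = (1*x0^2*x1^2 + (-2)*x0^2*x1*x2 + 1*x0^2*x2^2 + 1*x0^2*y1^2 + (-2)*x0^2*y1*y2 + 1*x0^2*y2^2 + (-2)*x0*x1^3 + 2*x0*x1^2*x2 + 2*x0*x1*x2^2 + (-2)*x0*x1*y1^2 + 4*x0*x1*y1*y2 + (-2)*x0*x1*y2^2 + 1*x1^4 + (-2)*x1^3*x2 + 2*x1^2*x2^2 + 2*x1^2*y1^2 + 2*x1^2*y1*y2 + 2*x1^2*y2^2 + (-2)*x1^2*y0*y2 + 1*x1^2*y0^2 + (-2)*x1*x2^3 + (-2)*x1*x2*y2^2 + 4*x1*x2*y0*y2 + (-2)*x1*x2*y0^2 + 1*x2^4 + (-2)*x0*x2^3 + 2*x2^2*y2^2 + (-2)*x2^2*y0*y2 + 1*x2^2*y0^2 + 2*x2^2*y1^2 + (-2)*x0*x2*y1^2 + (-6)*y1^2*y2^2 + 2*y0*y1^2*y2 + 1*y0^2*y1^2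 + 2*x2^2*y1*y2 + 4*x0*x2*y1*y2 + 2*y1*y2^3 + 2*y0*y1*y2^2 + (-2)*y0^2*y1*y2 + (-2)*x0*x2*y2^2 + 1*y2^4 + (-2)*y0*y2^3 + 1*y0^2*y2^2 + (-2)*x1^2*y0*y1 + (-8)*x1*x2*y1*y2 + 4*x1*x2*y0*y1 + (-2)*x2^2*y0*y1 + 2*y1^3*y2 + (-2)*y0*y1^3 + (-2)*x1*x2*y1^2 + 1*y1^4 + (-3)*x1^2*r + 6*x1*x2*r + (-3)*x2^2*r + 1*y1^2*r + (-2)*y1*y2*r + 1*y2^2*r)*e0 + (8*x0^2*y2^2 + 2*x0*x1*x2^2 + 4*x0^2*x1*x2 + (-2)*x0*x1*y2^2 + 4*x0*x1*y0*y2 + 1*x1^2*x2^2 + (-2)*x0*x1^2*x2 + 1*x1^2*y2^2 + (-2)*x1^2*y0*y2 + (-2)*x2^2*y0*y1 + 4*x0*x2*y0*y1 + 2*y0*y1*y2^2 + 2*x2^2*y0*y2 + (-8)*x0*x2*y0*y2 + 2*y0*y2^3 + (-2)*x1*x2^3 + (-2)*x1*x2*y2^2 + 4*x1*x2*y0*y2 + 1*x2^4 + (-2)*x0*x2^3 + 2*x2^2*y2^2 + 1*x2^2*y1^2 + (-2)*x0*x2*y1^2 + 1*y1^2*y2^2 + (-2)*y0*y1^2*y2 + (-2)*x2^2*y1*y2 + 4*x0*x2*y1*y2 + (-4)*x0^2*y1*y2 + (-2)*y1*y2^3 + (-2)*x0*x2*y2^2 + 1*y2^4 + (-1)*x2^2*r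 + 4*x0*x2*r + (-4)*x0^2*r + (-2)*x0*x1*r + 1*x1^2*r + (-5)*y2^2*r + 2*y1*y2*r + (-2)*y0*y1*r + (-2)*x1*x2*r + 1*y1^2*r + 2*r^2)*e1 + ((-8)*x0^2*x1^2 + 4*x0^2*x1*x2 + (-4)*x0^2*y1*y2 + 4*x0*x1^2*x2 + (-2)*x0*x1*x2^2 + 4*x0*x1*y1*y2 + (-8)*x0*x1*y0*y1 + (-2)*x0*x1*y2^2 + 4*x0*x1*y0*y2 + (-4)*x1^2*y0*y2 + 4*x1*x2*y0*y1 + (-2)*x2^2*y0*y1 + 4*x0*x2*y0*y1 + (-2)*y0*y1*y2^2 + 4*x1^2*r + 2*x0*x1*r + 4*x0^2*r + (-4)*x1*x2*r + 2*x2^2*r + 2*y0*y1*r + (-4)*x0*x2*r + 2*y2^2*r + (-2)*r^2)*e2).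
  { intros e0 e1 e2 -> -> ->. ring. }
  specialize (E 0 0 0 ltac:(lra) ltac:(lra) ltac:(lra)). lra.
Qed.
Lemma fin0 (a0 a1 a2 a3 a4 X Y Rd s o1 o2 o3 D0 : R) :
  X <> 0 -> Y <> 0 -> s^2 = 1 ->
  X^2 - (a2^2+a3^2) = -2*D0 ->
  a2*a3*X = 2*Rd*s*o1 -> a4*Y*X = 2*Rd*s*o2 -> a0*a1*Y = 2*Rd*s*o3 ->
  -2*D0*(o1+o2+o3)*X^2*Y^2 = o1*((a0^2+a1^2+a4^2)-(a2^2+a3^2))*X^2*Y^2 + 8*Rd^2*o1*o2*o3 ->
  (X^2-(a2^2+a3^2))*(4*(s*(o1+o2+o3)/2)*Rd) = a2*a3*(((a0^2+a1^2+a4^2)-(a2^2+a3^2))*X + 2*(a0*a1*a4)).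
Proof. intros hX hY hs hD h1 h2 h3 hc.
  apply Rmult_eq_reg_r with (X^2*Y^2); [|apply Rmult_integral_contrapositive; split; apply pow_nonzero; auto].
  remember ((a0^2+a1^2+a4^2)-(a2^2+a3^2)) as K eqn:HK.
  rewrite hD.
  assert (e1: -2*D0*(4*(s*(o1+o2+o3)/2)*Rd)*(X^2*Y^2) = 2*s*Rd*(-2*D0*(o1+o2+o3)*X^2*Y^2)) by field.
  rewrite e1, hc.
  assert (e2: a2*a3*(K*X + 2*(a0*a1*a4))*(X^2*Y^2) = (a2*a3*X)*K*X^2*Y^2 + 2*(a2*a3*X)*(a4*Y*X)*(a0*a1*Y)) by ring.
  rewrite e2, h1, h2, h3.
  assert (e3: s^3 = s) by (replace (s^3) with (s*s^2) by ring; rewrite hs; ring).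
  assert (e4: 2*Rd*s*o1*K*X^2*Y^2 + 2*(2*Rd*s*o1)*(2*Rd*s*o2)*(2*Rd*s*o3) = 2*Rd*s*o1*K*X^2*Y^2 + 16*Rd^3*o1*o2*o3*s^3) by ring.
  rewrite e4, e3. ring.
Qed.

Lemma fin (a0 a1 a2 a3 a4 X Y Rd s o1 o2 o3 D0 A p q Q P : R) :
  p = a2*a3 -> P = a0*a1*a4 -> q = a2^2+a3^2 -> Q = a0^2+a1^2+a4^2 -> A = s*(o1+o2+o3)/2 ->
  X <> 0 -> Y <> 0 -> s^2 = 1 ->
  X^2 - (a2^2+a3^2) = -2*D0 ->
  a2*a3*X = 2*Rd*s*o1 -> a4*Y*X = 2*Rd*s*o2 -> a0*a1*Y = 2*Rd*s*o3 ->
  -2*D0*(o1+o2+o3)*X^2*Y^2 = o1*((a0^2+a1^2+a4^2)-(a2^2+a3^2))*X^2*Y^2 + 8*Rd^2*o1*o2*o3 ->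
  (X ^ 2 - q) * (4 * A * Rd) = p * ((Q - q) * X + 2 * P).
Proof. intros -> -> -> -> ->. apply fin0. Qed.
Lemma pdist_sq (P Q : point) : pdist P Q ^ 2 = (fst P - fst Q)^2 + (snd P - snd Q)^2.
Proof. unfold pdist. apply pow2_sqrt. apply Rplus_le_le_0_compat; apply pow2_ge_0. Qed.

Lemma pdist_ge0 (P Q : point) : 0 <= pdist P Q.
Proof. unfold pdist. apply sqrt_pos. Qed.

Lemma pdist_sym (P Q : point) : pdist P Q = pdist Q P.
Proof. unfold pdist. f_equal. ring. Qed.

Lemma sq_inj (a b : R) : 0 <= a -> 0 <= b -> a^2 = b^2 -> a = b.
Proof. intros. nra. Qed.

Lemma tri (A B C O : point) (Rd : R) : 0 < Rd ->
  pdist O A = Rd -> pdist O B = Rd -> pdist O C = Rd ->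
  pdist A B * pdist B C * pdist C A = 2 * Rd * Rabs (orient A B C).
Proof.
  intros HR HA HB HC.
  assert (EA := pdist_sq O A). assert (EB := pdist_sq O B). assert (EC := pdist_sq O C).
  rewrite HA in EA. rewrite HB in EB. rewrite HC in EC.
  destruct A as [ax ay], B as [bx by0], C as [cx cy], O as [ox oy]. cbn [fst snd] in EA, EB, EC.
  apply sq_inj.
  - apply Rmult_le_pos; [apply Rmult_le_pos|]; apply pdist_ge0.
  - apply Rmult_le_pos; [lra| apply Rabs_pos].
  - rewrite !Rpow_mult_distr, !pdist_sq, pow2_abs. simpl fst; simpl snd. unfold orient; simpl.
    pose proof (tri_core (ax-ox) (ay-oy) (bx-ox) (by0-oy) (cx-ox) (cy-oy) (Rd^2)) as T.
    assert (T' := T ltac:(rewrite EA; ring) ltac:(rewrite EB; ring) ltac:(rewrite EC; ring)).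
    transitivity (((ax - ox - (bx - ox)) ^ 2 + (ay - oy - (by0 - oy)) ^ 2) *
      ((bx - ox - (cx - ox)) ^ 2 + (by0 - oy - (cy - oy)) ^ 2) *
      ((cx - ox - (ax - ox)) ^ 2 + (cy - oy - (ay - oy)) ^ 2)); [ring|].
    rewrite T'. ring.
Qed.

Lemma abs_s (s o : R) : s^2 = 1 -> s*o > 0 -> Rabs o = s*o.
Proof. intros Hs Ho. destruct (Rcase_abs o) as [Hl|Hr].
  - rewrite Rabs_left by lra. nra.
  - rewrite Rabs_right by lra. nra.
Qed.

Theorem corollary5 (V0 V1 V2 V3 V4 O : point) (Rad : R) :
  convex_pentagon V0 V1 V2 V3 V4 ->
  0 < Rad ->
  pdist O V0 = Rad -> pdist O V1 = Rad -> pdist O V2 = Rad ->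
  pdist O V3 = Rad -> pdist O V4 = Rad ->
  let A := pentagon_area V0 V1 V2 V3 V4 in
  let a0 := pdist V2 V3 in
  let a1 := pdist V3 V4 in
  let a2 := pdist V4 V0 in
  let a3 := pdist V0 V1 in
  let a4 := pdist V1 V2 in
  let X := pdist V1 V4 in
  let p := a2 * a3 in
  let P := a0 * a1 * a4 in
  let q := a2 ^ 2 + a3 ^ 2 in
  let Q := a0 ^ 2 + a1 ^ 2 + a4 ^ 2 in
  (X ^ 2 - q) * (4 * A * Rad) = p * ((Q - q) * X + 2 * P).
Proof.
  intros Hc HR H0 H1 H2 H3 H4. cbv zeta.
  set (o1 := orient V0 V1 V4). set (o2 := orient V1 V2 V4). set (o3 := orient V2 V3 V4).
  assert (Hs : exists s, s^2 = 1 /\ s*o1 > 0 /\ s*o2 > 0 /\ s*o3 > 0).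
  { destruct Hc as [Hp|Hp].
    - exists 1.
      pose proof (Hp 0%nat 4%nat ltac:(lia) ltac:(lia) ltac:(lia) ltac:(simpl; lia)) as Ha.
      pose proof (Hp 1%nat 4%nat ltac:(lia) ltac:(lia) ltac:(lia) ltac:(simpl; lia)) as Hb.
      pose proof (Hp 2%nat 4%nat ltac:(lia) ltac:(lia) ltac:(lia) ltac:(simpl; lia)) as Hd.
      change (o1 > 0) in Ha. change (o2 > 0) in Hb. change (o3 > 0) in Hd. lra.
    - exists (-1).
      pose proof (Hp 0%nat 4%nat ltac:(lia) ltac:(lia) ltac:(lia) ltac:(simpl; lia)) as Ha.
      pose proof (Hp 1%nat 4%nat ltac:(lia) ltac:(lia) ltac:(lia) ltac:(simpl; lia)) as Hb.
      pose proof (Hp 2%nat 4%nat ltac:(lia) ltac:(lia) ltac:(lia) ltac:(simpl; lia)) as Hd.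
      change (o1 < 0) in Ha. change (o2 < 0) in Hb. change (o3 < 0) in Hd. lra. }
  destruct Hs as [s [Hs [Hs1 [Hs2 Hs3]]]].
  assert (T1 : pdist V4 V0 * pdist V0 V1 * pdist V1 V4 = 2*Rad*s*o1).
  { rewrite (tri V4 V0 V1 O Rad) by auto.
    replace (orient V4 V0 V1) with o1 by (unfold o1, orient; ring).
    rewrite (abs_s s o1) by auto. ring. }
  assert (T2 : pdist V1 V2 * pdist V2 V4 * pdist V1 V4 = 2*Rad*s*o2).
  { rewrite (pdist_sym V1 V4), (tri V1 V2 V4 O Rad) by auto.
    fold o2; rewrite (abs_s s o2) by auto. ring. }
  assert (T3 : pdist V2 V3 * pdist V3 V4 * pdist V2 V4 = 2*Rad*s*o3).
  { rewrite (pdist_sym V2 V4), (tri V2 V3 V4 O Rad) by auto.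
    fold o3; rewrite (abs_s s o3) by auto. ring. }
  assert (HRs : Rad * s * o1 > 0) by (assert (0 < Rad * (s*o1)) by (apply Rmult_lt_0_compat; lra); lra).
  assert (HX : pdist V1 V4 <> 0).
  { intro E. rewrite E in T1. nra. }
  assert (HY : pdist V2 V4 <> 0).
  { intro E. rewrite E in T3. nra. }
  assert (EO0 := pdist_sq O V0). assert (EO1 := pdist_sq O V1). assert (EO2 := pdist_sq O V2).
  assert (EO3 := pdist_sq O V3). assert (EO4 := pdist_sq O V4).
  rewrite H0 in EO0. rewrite H1 in EO1. rewrite H2 in EO2. rewrite H3 in EO3. rewrite H4 in EO4.
  destruct V0 as [x0 y0], V1 as [x1 y1], V2 as [x2 y2], V3 as [x3 y3], V4 as [x4 y4], O as [ox oy].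
  cbn [fst snd] in EO0, EO1, EO2, EO3, EO4.
  apply (fin (pdist (x2,y2) (x3,y3)) (pdist (x3,y3) (x4,y4)) (pdist (x4,y4) (x0,y0))
    (pdist (x0,y0) (x1,y1)) (pdist (x1,y1) (x2,y2)) (pdist (x1,y1) (x4,y4)) (pdist (x2,y2) (x4,y4))
    Rad s o1 o2 o3 ((x1-x0)*(x4-x0)+(y1-y0)*(y4-y0))); try reflexivity; auto.
  -
    unfold pentagon_area. simpl.
    rewrite (abs_s s) by (auto; unfold o1, o2, o3, orient in *; simpl in *; nra).
    unfold o1, o2, o3, orient; simpl. field.
  - rewrite !pdist_sq. simpl. ring.
  - rewrite !pdist_sq. simpl.
    pose proof (core (x0-ox) (y0-oy) (x1-ox) (y1-oy) (x2-ox) (y2-oy) (x3-ox) (y3-oy) (x4-ox) (y4-oy) (Rad^2)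
      ltac:(rewrite EO0; ring) ltac:(rewrite EO1; ring) ltac:(rewrite EO2; ring)
      ltac:(rewrite EO3; ring) ltac:(rewrite EO4; ring)) as C.
    cbv zeta in C. unfold o in C. unfold o1, o2, o3, orient; simpl.
    replace (Rad^2) with (Rad^2) by reflexivity.
    transitivity (-2 * ((x1 - ox - (x0 - ox)) * (x4 - ox - (x0 - ox)) + (y1 - oy - (y0 - oy)) * (y4 - oy - (y0 - oy))) *
     ((x1 - ox - (x0 - ox)) * (y4 - oy - (y0 - oy)) - (y1 - oy - (y0 - oy)) * (x4 - ox - (x0 - ox)) +
      ((x2 - ox - (x1 - ox)) * (y4 - oy - (y1 - oy)) - (y2 - oy - (y1 - oy)) * (x4 - ox - (x1 - ox))) +
      ((x3 - ox - (x2 - ox)) * (y4 - oy - (y2 - oy)) - (y3 - oy - (y2 - oy)) * (x4 - ox - (x2 - ox)))) *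
     ((x1 - ox - (x4 - ox)) ^ 2 + (y1 - oy - (y4 - oy)) ^ 2) * ((x2 - ox - (x4 - ox)) ^ 2 + (y2 - oy - (y4 - oy)) ^ 2)); [ring|].
    rewrite C. ring.
Qed.
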